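(* Let $q>1$ and let $k$ be a positive integer. For $z,s\in\mathbb{C}$ with $|z|<1$ and $\Re(s)<1$ (the variable of integration $a$ ranging over $a\in\mathbb C\setminus\mathbb Z_0^-$), $$\int_0^1 \Phi_k(z,s,a)\,d_qa=\frac{1}{[1-s]_q}+\sum_{r=0}^{k-1}\binom kr \sum_{l=0}^\infty\binom{-s}{l}\frac{\mathrm{Li}_{k-r}(z,s+l)}{[l+1]_q}.$$ Moreover, for $a\in\mathbb C\setminus\mathbb Z_0^-$ and with $s\in\mathbb C$ arbitrary when $|z|<1$, or $\Re(s)>k$ when $|z|=1$, $$\int_0^1 \Phi_k(z,s,k-a)\,d_qa= z^{-k}\sum_{l=0}^\infty(-1)^l\binom{-s}{l}\frac{\mathrm{Li}_{k}(z,s+l)}{[l+1]_q},$$ $$\int_0^1 \Phi_k(z,s,k+a)\,d_qa= z^{-k}\sum_{l=0}^\infty\binom{-s}{l}\frac{\mathrm{Li}_{k}(z,s+l)}{[l+1]_q}.$$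
   Context: $\mathbb Z_0^-=\{0,-1,-2,\ldots\}$. For $q>1$, the Jackson integral is $\int_0^1 f(a)\,d_qa=(q-1)\sum_{n=1}^\infty f(q^{-n})q^{-n}$, and $[x]_q=\frac{q^{x}-1}{q-1}$. The multiple Hurwitz-Lerch zeta function is $\Phi_k(z,s,a)=\sum_{m_1,\ldots,m_k=0}^\infty\frac{z^{m_1+\dots+m_k}}{(m_1+\dots+m_k+a)^{s}}$ for $a\in\mathbb C\setminus\mathbb Z_0^-$, with $s\in\mathbb C$ when $|z|<1$ and $\Re(s)>k$ when $|z|=1$. The multiple Lipschitz-Lerch zeta function is $\mathrm{Li}_k(z,s)=\sum_{m_1,\ldots,m_k=1}^\infty\frac{z^{m_1+\dots+m_k}}{(m_1+\dots+m_k)^{s}}$, with $s\in\mathbb C$ when $|z|<1$ and $\Re(s)>k$ when $|z|=1$. $\binom{-s}{l}=\frac{(-s)(-s-1)\cdots(-s-l+1)}{l!}$. *)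

(* Defs.v *)
From Stdlib Require Import Reals Factorial.
From Coquelicot Require Import Coquelicot.
Open Scope R_scope.

Definition rpowC (x : R) (w : C) : C :=
  Cmult (RtoC (exp (Re w * ln x)))
        (cos (Im w * ln x), sin (Im w * ln x)).

(* Sum of a complex series, componentwise (Coquelicot's total [Series]);
   it is the usual sum whenever the series converges. *)
Definition CSeries (a : nat -> C) : C :=
  (Series (fun n => Re (a n)), Series (fun n => Im (a n))).

(* Jackson integral for q > 1:
   int_0^1 f(a) d_q a = (q-1) sum_{n>=1} f(q^{-n}) q^{-n}. *)
Definition jackson (q : R) (f : R -> C) : C :=
  Cmult (RtoC (q - 1))
        (CSeries (fun n => Cmult (f (/ q ^ (S n))) (RtoC (/ q ^ (S n))))).

Definition qnum (q : R) (x : C) : C :=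
  Cdiv (Cminus (rpowC q x) (RtoC 1)) (RtoC (q - 1)).

(* Iterated form of the k-fold sum
   sum_{m_1,...,m_k >= 0} z^(m_1+...+m_k) / (m_1+...+m_k + c)^s. *)
Fixpoint PhiAux (k : nat) (z s : C) (c : R) : C :=
  match k with
  | O => rpowC c (Copp s)
  | S k' => CSeries (fun m => Cmult (Cpow z m) (PhiAux k' z s (c + INR m)))
  end.

(* Multiple Hurwitz-Lerch zeta function Phi_k(z,s,a); here a is a positive
   real (the only values at which the Jackson integral evaluates it). *)
Definition Phi (k : nat) (z s : C) (a : R) : C := PhiAux k z s a.

(* Iterated form of sum_{m_1,...,m_k >= 1} z^(m_1+..+m_k)/(m_1+..+m_k + c)^s. *)
Fixpoint LiAux (k : nat) (z s : C) (c : R) : C :=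
  match k with
  | O => rpowC c (Copp s)
  | S k' => CSeries (fun m => Cmult (Cpow z (S m)) (LiAux k' z s (c + INR (S m))))
  end.

Definition Li (k : nat) (z s : C) : C := LiAux k z s 0.

Fixpoint fallC (w : C) (l : nat) : C :=
  match l with
  | O => RtoC 1
  | S l' => Cmult (fallC w l') (Cminus w (RtoC (INR l')))
  end.
Definition binomC (w : C) (l : nat) : C := Cdiv (fallC w l) (RtoC (INR (fact l))).

(* Main.v *)
Require Import Defs.
From Stdlib Require Import Reals.
From Coquelicot Require Import Coquelicot.
From Stdlib Require Import Lra Lia Factorial ZArith.
Open Scope R_scope.

Definition CisS (a : nat -> C) (l : C) := @is_series C_AbsRing C_NormedModule a l.

Lemma sum_n_Re (a : nat -> C) n :
  Re (@sum_n (NormedModule.AbelianMonoid _ C_NormedModule) a n) = sum_n (fun k => Re (a k)) n.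
Proof.
  induction n. - rewrite !sum_O. reflexivity.
  - rewrite !sum_Sn, <- IHn. reflexivity.
Qed.

Lemma sum_n_Im (a : nat -> C) n :
  Im (@sum_n (NormedModule.AbelianMonoid _ C_NormedModule) a n) = sum_n (fun k => Im (a k)) n.
Proof.
  induction n. - rewrite !sum_O. reflexivity.
  - rewrite !sum_Sn, <- IHn. reflexivity.
Qed.

Lemma CisS_Re a l : CisS a l -> is_series (fun n => Re (a n)) (Re l).
Proof.
  unfold CisS, is_series; intros H.
  apply filterlim_locally; intros eps.
  pose proof (proj1 (filterlim_locally _ _) H eps) as H0; clear H; rename H0 into H.
  eapply filter_imp; [|exact H]. intros n [H1 _].
  change (ball (Re l) eps (Re (@sum_n (NormedModule.AbelianMonoid _ C_NormedModule) a n))) in H1.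
  rewrite sum_n_Re in H1. exact H1.
Qed.

Lemma CisS_Im a l : CisS a l -> is_series (fun n => Im (a n)) (Im l).
Proof.
  unfold CisS, is_series; intros H.
  apply filterlim_locally; intros eps.
  pose proof (proj1 (filterlim_locally _ _) H eps) as H0; clear H; rename H0 into H.
  eapply filter_imp; [|exact H]. intros n [_ H1].
  change (ball (Im l) eps (Im (@sum_n (NormedModule.AbelianMonoid _ C_NormedModule) a n))) in H1.
  rewrite sum_n_Im in H1. exact H1.
Qed.

Lemma CSeries_CisS a l : CisS a l -> CSeries a = l.
Proof.
  intros H. unfold CSeries.
  rewrite (is_series_unique _ _ (CisS_Re _ _ H)), (is_series_unique _ _ (CisS_Im _ _ H)).
  destruct l; reflexivity.
Qed.

Lemma CisS_abs a : ex_series (fun n => Cmod (a n)) -> CisS a (CSeries a).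
Proof.
  intros H.
  assert (Hex : @ex_series C_AbsRing C_CompleteNormedModule a).
  { apply (ex_series_le (V := C_CompleteNormedModule) a (fun n => Cmod (a n))); auto.
    intros; apply Rle_refl. }
  destruct Hex as [l Hl].
  assert (Hl' : CisS a l) by exact Hl.
  rewrite (CSeries_CisS _ _ Hl'); exact Hl'.
Qed.

Lemma CisS_unique a l1 l2 : CisS a l1 -> CisS a l2 -> l1 = l2.
Proof. intros H1 H2. rewrite <- (CSeries_CisS _ _ H1). apply CSeries_CisS; auto. Qed.

Lemma CisS_norm_le a l b L :
  CisS a l -> (forall n, Cmod (a n) <= b n) -> is_series b L -> Cmod l <= L.
Proof.
  intros Ha Hb HL.
  assert (H1 : is_lim_seq (fun n => Cmod (@sum_n (NormedModule.AbelianMonoid _ C_NormedModule) a n)) (Cmod l)).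
  { unfold is_lim_seq. eapply filterlim_comp; [exact Ha|].
    exact (@filterlim_norm C_AbsRing C_NormedModule l). }
  assert (H2 : Rbar_le (Cmod l) L).
  { eapply is_lim_seq_le; [| exact H1 | exact HL].
    intros n. eapply Rle_trans.
    - unfold sum_n.
      exact (@norm_sum_n_m C_AbsRing C_NormedModule a 0 n).
    - change (sum_n_m (fun n0 => Cmod (a n0)) 0 n <= sum_n b n).
      unfold sum_n. apply sum_n_m_le. intros; apply Hb. }
  exact H2.
Qed.

Lemma is_series_lim (a : nat -> R) l : is_series a l -> is_lim_seq (sum_n a) l.
Proof. intros H; exact H. Qed.

Lemma ex_series_nn_le (a c : nat -> R) :
  (forall n, 0 <= a n <= c n) -> ex_series c -> ex_series a.
Proof.
  intros H Hc. apply (ex_series_le (V := R_CompleteNormedModule) a c); auto.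
  intros n. change (Rabs (a n) <= c n). rewrite Rabs_pos_eq; apply H.
Qed.

Lemma sum_n_nn_le (b : nat -> R) J : (forall n, 0 <= b n) -> ex_series b -> sum_n b J <= Series b.
Proof.
  intros Hb Hex. apply Series_correct in Hex.
  apply (is_lim_seq_incr_compare (sum_n b)); [exact (is_series_lim _ _ Hex)|].
  intros n. rewrite sum_Sn. change (sum_n b n <= sum_n b n + b (S n)). specialize (Hb (S n)); lra.
Qed.

Lemma term_nn_le (b : nat -> R) J : (forall n, 0 <= b n) -> ex_series b -> b J <= Series b.
Proof.
  intros Hb Hex. eapply Rle_trans; [|apply (sum_n_nn_le b J); auto].
  destruct J. rewrite sum_O; lra. rewrite sum_Sn. change (b (S J) <= sum_n b J + b (S J)).
  assert (0 <= sum_n b J). { clear Hex. induction J. rewrite sum_O; auto. rewrite sum_Sn.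
    change (0 <= sum_n b J + b (S J)). specialize (Hb (S J)); lra. }
  lra.
Qed.

Lemma series_le_bound (a : nat -> R) M : (forall n, sum_n a n <= M) -> ex_series a -> Series a <= M.
Proof.
  intros H Hex. apply Series_correct in Hex.
  assert (Hc : is_lim_seq (fun _ => M) M) by apply is_lim_seq_const.
  exact (is_lim_seq_le _ _ _ _ H (is_series_lim _ _ Hex) Hc).
Qed.

Lemma is_series_sum_n (b : nat -> nat -> R) (B : nat -> R) J :
  (forall j, is_series (fun i => b i j) (B j)) ->
  is_series (fun i => sum_n (fun j => b i j) J) (sum_n B J).
Proof.
  intros H. induction J.
  - rewrite sum_O. eapply is_series_ext; [|apply H]. intros; rewrite sum_O; auto.
  - rewrite sum_Sn. eapply is_series_ext; [|apply (is_series_plus _ _ _ _ IHJ (H (S J)))].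
    intros; rewrite sum_Sn; auto.
Qed.

Lemma CisS_plus a b la lb : CisS a la -> CisS b lb -> CisS (fun n => Cplus (a n) (b n)) (Cplus la lb).
Proof. intros Ha Hb. exact (is_series_plus _ _ _ _ Ha Hb). Qed.

Lemma CisS_scal c a l : CisS a l -> CisS (fun n => Cmult c (a n)) (Cmult c l).
Proof. intros Ha. exact (is_series_scal c _ _ Ha). Qed.

Lemma CisS_ext a b l : (forall n, a n = b n) -> CisS a l -> CisS b l.
Proof. intros H Ha. exact (is_series_ext _ _ _ H Ha). Qed.

Lemma CisS_minus a b la lb : CisS a la -> CisS b lb -> CisS (fun n => Cminus (a n) (b n)) (Cminus la lb).
Proof. intros Ha Hb. exact (is_series_minus _ _ _ _ Ha Hb). Qed.

Lemma CisS_sum_n (a : nat -> nat -> C) (B : nat -> C) J :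
  (forall j, CisS (fun i => a i j) (B j)) ->
  CisS (fun i => @sum_n (NormedModule.AbelianMonoid _ C_NormedModule) (fun j => a i j) J)
       (@sum_n (NormedModule.AbelianMonoid _ C_NormedModule) B J).
Proof.
  intros H. induction J.
  - rewrite sum_O. eapply CisS_ext; [|apply H]. intros; rewrite sum_O; auto.
  - rewrite sum_Sn. eapply CisS_ext; [|apply (CisS_plus _ _ _ _ IHJ (H (S J)))].
    intros; rewrite sum_Sn; auto.
Qed.

Lemma fub_nn (b : nat -> nat -> R) :
  (forall i j, 0 <= b i j) -> (forall i, ex_series (b i)) -> ex_series (fun i => Series (b i)) ->
  (forall j, ex_series (fun i => b i j)) /\ ex_series (fun j => Series (fun i => b i j)) /\
  Series (fun j => Series (fun i => b i j)) <= Series (fun i => Series (b i)).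
Proof.
  intros H0 H1 H2.
  assert (Hc : forall j, ex_series (fun i => b i j)).
  { intros j. apply (ex_series_nn_le _ (fun i => Series (b i))); auto.
    intros i; split; auto. apply term_nn_le; auto. }
  assert (Hp : forall J, sum_n (fun j => Series (fun i => b i j)) J <= Series (fun i => Series (b i))).
  { intros J. rewrite <- (is_series_unique _ _ (is_series_sum_n b _ J (fun j => Series_correct _ (Hc j)))).
    apply Series_le; auto. intros i; split.
    - clear -H0. induction J. rewrite sum_O; apply H0. rewrite sum_Sn. change (0 <= sum_n (fun j => b i j) J + b i (S J)).
      specialize (H0 i (S J)); lra.
    - apply sum_n_nn_le; auto. }
  assert (Hnn : forall j, 0 <= Series (fun i => b i j)).
  { intros j. eapply Rle_trans; [|apply (term_nn_le (fun i => b i j) 0); [intros; apply H0|apply Hc]]. apply H0. }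
  assert (Hex : ex_series (fun j => Series (fun i => b i j))).
  { destruct (ex_finite_lim_seq_incr (sum_n (fun j => Series (fun i => b i j))) (Series (fun i => Series (b i)))) as [l Hl].
    - intros n. rewrite sum_Sn. change (sum_n (fun j => Series (fun i => b i j)) n <= sum_n (fun j => Series (fun i => b i j)) n + Series (fun i => b i (S n))).
      specialize (Hnn (S n)); lra.
    - exact Hp.
    - exists l. exact Hl. }
  repeat split; auto. apply series_le_bound; auto.
Qed.

Lemma fubini (a : nat -> nat -> C) (b : nat -> nat -> R) :
  (forall i j, Cmod (a i j) <= b i j) -> (forall i, ex_series (b i)) -> ex_series (fun i => Series (b i)) ->
  exists S, CisS (fun i => CSeries (a i)) S /\ CisS (fun j => CSeries (fun i => a i j)) S.
Proof.
  intros Hab Hb1 Hb2.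
  assert (Hb0 : forall i j, 0 <= b i j). { intros; eapply Rle_trans; [apply Cmod_ge_0|apply Hab]. }
  destruct (fub_nn b Hb0 Hb1 Hb2) as [Hc [Hcs Hle1]].
  destruct (fub_nn (fun j i => b i j) (fun j i => Hb0 i j) Hc Hcs) as [_ [_ Hle2]].
  set (R0 := Series (fun i => Series (b i))).
  set (cs := fun j => Series (fun i => b i j)).
  assert (HR : is_series cs R0).
  { assert (E : Series cs = R0).
    { apply Rle_antisym; [exact Hle1|]. unfold R0. eapply Rle_trans; [|exact Hle2]. right.
      apply Series_ext; intros i. apply Series_ext; auto. }
    rewrite <- E. apply Series_correct; auto. }
  assert (HA : forall i, CisS (a i) (CSeries (a i))).
  { intros i. apply CisS_abs. apply (ex_series_nn_le _ (b i)); auto. intros; split; auto. apply Cmod_ge_0. }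
  assert (HAb : forall i, Cmod (CSeries (a i)) <= Series (b i)).
  { intros i. eapply CisS_norm_le; [apply HA| apply (Hab i) | apply Series_correct; auto]. }
  assert (HS : CisS (fun i => CSeries (a i)) (CSeries (fun i => CSeries (a i)))).
  { apply CisS_abs. apply (ex_series_nn_le _ (fun i => Series (b i))); auto. intros; split; auto. apply Cmod_ge_0. }
  assert (HB : forall j, CisS (fun i => a i j) (CSeries (fun i => a i j))).
  { intros j. apply CisS_abs. apply (ex_series_nn_le _ (fun i => b i j)); auto. intros; split; auto. apply Cmod_ge_0. }
  exists (CSeries (fun i => CSeries (a i))). split; auto.
  set (Stot := CSeries (fun i => CSeries (a i))).
  set (B := fun j => CSeries (fun i => a i j)).
  assert (Htail : forall i J, Cmod (Cminus (CSeries (a i)) (@sum_n (NormedModule.AbelianMonoid _ C_NormedModule) (a i) J))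
                  <= Series (b i) - sum_n (b i) J).
  { intros i J.
    assert (H1 : CisS (fun k => a i (S J + k)%nat) (Cminus (CSeries (a i)) (@sum_n (NormedModule.AbelianMonoid _ C_NormedModule) (a i) J))).
    { set (u := Cminus (CSeries (a i)) (@sum_n (NormedModule.AbelianMonoid _ C_NormedModule) (a i) J)).
      apply (is_series_incr_n (K:=C_AbsRing) (V:=C_NormedModule) (a i) (S J) u); [lia|]. simpl pred.
      assert (E : @plus (NormedModule.AbelianMonoid _ C_NormedModule) u (@sum_n (NormedModule.AbelianMonoid _ C_NormedModule) (a i) J) = CSeries (a i)).
      { unfold u. change (Cplus (Cminus (CSeries (a i)) (@sum_n (NormedModule.AbelianMonoid _ C_NormedModule) (a i) J)) (@sum_n (NormedModule.AbelianMonoid _ C_NormedModule) (a i) J) = CSeries (a i)). ring. }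
      rewrite E. apply HA. }
    assert (H2 : is_series (fun k => b i (S J + k)%nat) (Series (b i) - sum_n (b i) J)).
    { set (u := Series (b i) - sum_n (b i) J).
      apply (is_series_incr_n (K:=R_AbsRing) (V:=R_NormedModule) (b i) (S J) u); [lia|]. simpl pred.
      assert (E : @plus (NormedModule.AbelianMonoid _ R_NormedModule) u (@sum_n (NormedModule.AbelianMonoid _ R_NormedModule) (b i) J) = Series (b i)).
      { unfold u. change (Series (b i) - sum_n (b i) J + sum_n (b i) J = Series (b i)). ring. }
      rewrite E. apply Series_correct; auto. }
    eapply CisS_norm_le; [exact H1| |exact H2]. intros; apply Hab. }
  assert (Hdiff : forall J, CisS (fun i => Cminus (CSeries (a i)) (@sum_n (NormedModule.AbelianMonoid _ C_NormedModule) (a i) J))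
                                 (Cminus Stot (@sum_n (NormedModule.AbelianMonoid _ C_NormedModule) B J))).
  { intros J. apply CisS_minus; auto. apply (CisS_sum_n a B J). intros j; apply HB. }
  assert (Hg : forall J, is_series (fun i => Series (b i) - sum_n (b i) J) (R0 - sum_n cs J)).
  { intros J. apply (is_series_minus (V := R_NormedModule)). apply Series_correct; auto.
    apply is_series_sum_n. intros j. apply Series_correct; auto. }
  assert (Hbound : forall J, Cmod (Cminus Stot (@sum_n (NormedModule.AbelianMonoid _ C_NormedModule) B J)) <= R0 - sum_n cs J).
  { intros J. eapply CisS_norm_le; [apply Hdiff| |apply Hg]. intros i. apply Htail. }
  unfold CisS, is_series. apply filterlim_locally. intros eps.
  pose proof (proj1 (filterlim_locally _ _) HR eps) as HR'.
  eapply filter_imp; [|exact HR']. intros J HJ.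
  apply (norm_compat1 (K := C_AbsRing) (V := C_NormedModule)).
  change (Cmod (Cminus (@sum_n (NormedModule.AbelianMonoid _ C_NormedModule) B J) Stot) < eps).
  rewrite <- Cmod_opp. replace (Copp (Cminus (@sum_n (NormedModule.AbelianMonoid _ C_NormedModule) B J) Stot))
    with (Cminus Stot (@sum_n (NormedModule.AbelianMonoid _ C_NormedModule) B J)) by ring.
  eapply Rle_lt_trans; [apply Hbound|].
  change (Rabs (sum_n cs J - R0) < eps) in HJ.
  apply Rabs_def2 in HJ. lra.
Qed.

Lemma RtoC_neq0 x : x <> 0 -> RtoC x <> RtoC 0.
Proof. intros H E. apply H. apply (f_equal fst) in E. exact E. Qed.

Lemma rpowC_Re x w : Re (rpowC x w) = exp (Re w * ln x) * cos (Im w * ln x).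
Proof. unfold rpowC. simpl. ring. Qed.
Lemma rpowC_Im x w : Im (rpowC x w) = exp (Re w * ln x) * sin (Im w * ln x).
Proof. unfold rpowC. simpl. ring. Qed.

Lemma C_ext (u v : C) : Re u = Re v -> Im u = Im v -> u = v.
Proof. destruct u, v; simpl; intros; subst; auto. Qed.

Lemma rpowC_plus x w v : rpowC x (Cplus w v) = Cmult (rpowC x w) (rpowC x v).
Proof.
  destruct w as [a b], v as [c d]. unfold rpowC; apply C_ext; simpl;
  rewrite !Rmult_plus_distr_r, exp_plus; [rewrite cos_plus|rewrite sin_plus]; ring.
Qed.

Lemma rpowC_real x r : rpowC x (RtoC r) = RtoC (exp (r * ln x)).
Proof.
  apply C_ext.
  - rewrite rpowC_Re. simpl. rewrite Rmult_0_l, cos_0. ring.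
  - rewrite rpowC_Im. simpl. rewrite Rmult_0_l, sin_0. ring.
Qed.

Lemma rpowC_mulbase x y w : 0 < x -> 0 < y -> rpowC (x * y) w = Cmult (rpowC x w) (rpowC y w).
Proof.
  intros Hx Hy. unfold rpowC. rewrite ln_mult by auto. destruct w as [a b].
  apply C_ext; simpl;
  rewrite !Rmult_plus_distr_l, exp_plus; [rewrite cos_plus|rewrite sin_plus]; ring.
Qed.

Lemma rpowC_0 x : rpowC x (RtoC 0) = RtoC 1.
Proof. rewrite rpowC_real, Rmult_0_l, exp_0. reflexivity. Qed.

Lemma Cmod_RtoC_pos r : 0 <= r -> Cmod (RtoC r) = r.
Proof. intros H. rewrite Cmod_R. apply Rabs_pos_eq; auto. Qed.

Lemma Cmod_rpowC x w : Cmod (rpowC x w) = exp (Re w * ln x).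
Proof.
  unfold rpowC. rewrite Cmod_mult, Cmod_RtoC_pos by (left; apply exp_pos).
  unfold Cmod. simpl. rewrite !Rmult_1_r.
  match goal with |- context [cos ?t] => pose proof (sin2_cos2 t) as E end.
  unfold Rsqr in E. rewrite Rplus_comm, E, sqrt_1. ring.
Qed.

Lemma exp_nat_ln x n : 0 < x -> exp (INR n * ln x) = x ^ n.
Proof. intros Hx. rewrite <- Rpower_pow by auto. reflexivity. Qed.

Lemma exp_negnat_ln x n : 0 < x -> exp (- INR n * ln x) = / x ^ n.
Proof.
  intros Hx. rewrite Ropp_mult_distr_l_reverse, exp_Ropp, exp_nat_ln; auto.
Qed.

Lemma binomC_0 w : binomC w 0 = RtoC 1.
Proof. unfold binomC. simpl. apply C_ext; simpl; field. Qed.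

Lemma binomC_S w l :
  binomC w (S l) = Cmult (binomC w l) (Cmult (Cminus w (RtoC (INR l))) (RtoC (/ INR (S l)))).
Proof.
  unfold binomC. simpl fallC. rewrite fact_simpl, mult_INR.
  assert (H1 : INR (fact l) <> 0) by apply INR_fact_neq_0.
  assert (H2 : INR (S l) <> 0) by (apply not_0_INR; lia).
  rewrite (RtoC_inv (INR (S l))) by auto.
  rewrite RtoC_mult. field. split; apply RtoC_neq0; auto.
Qed.

Lemma binomC_S' w l :
  Cmult (binomC w (S l)) (RtoC (INR (S l))) = Cmult (binomC w l) (Cminus w (RtoC (INR l))).
Proof.
  rewrite binomC_S.
  assert (H2 : INR (S l) <> 0) by (apply not_0_INR; lia).
  rewrite <- Cmult_assoc, <- Cmult_assoc, <- RtoC_mult, Rinv_l by auto. apply C_ext; simpl; ring.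
Qed.

Fixpoint mseq (mu : R) (l : nat) : R :=
  match l with O => 1 | S l' => mseq mu l' * ((mu + INR l') / INR (S l')) end.

Lemma mseq_pos mu l : 0 < mu -> 0 < mseq mu l.
Proof.
  intros H. induction l. simpl; lra.
  change (mseq mu (S l)) with (mseq mu l * ((mu + INR l) / INR (S l))).
  apply Rmult_lt_0_compat; auto. apply Rdiv_lt_0_compat.
  pose proof (pos_INR l); lra. apply lt_0_INR; lia.
Qed.

Lemma binomC_le w l : Cmod (binomC w l) <= mseq (Cmod w + 1) l.
Proof.
  induction l.
  - rewrite binomC_0. simpl. rewrite Cmod_1; lra.
  - rewrite binomC_S. rewrite !Cmod_mult.
    change (mseq _ (S l)) with (mseq (Cmod w + 1) l * ((Cmod w + 1 + INR l) / INR (S l))).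
    assert (H2 : 0 < INR (S l)) by (apply lt_0_INR; lia).
    rewrite Cmod_RtoC_pos by (left; apply Rinv_0_lt_compat; auto).
    unfold Rdiv. rewrite <- !Rmult_assoc. apply Rmult_le_compat_r. left; apply Rinv_0_lt_compat; auto.
    apply Rmult_le_compat; auto. apply Cmod_ge_0. apply Cmod_ge_0.
    unfold Cminus. eapply Rle_trans; [apply Cmod_triangle|]. rewrite Cmod_opp.
    rewrite Cmod_RtoC_pos by apply pos_INR. lra.
Qed.

Lemma lim_inv_S : is_lim_seq (fun n => / INR (S n)) 0.
Proof.
  assert (H : is_lim_seq (fun n => INR (S n)) p_infty).
  { apply (is_lim_seq_incr_1 INR p_infty). apply is_lim_seq_INR. }
  apply (is_lim_seq_inv _ _ H). discriminate.
Qed.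

Lemma mseq_ratio_series mu r : 0 < mu -> 0 < r < 1 -> ex_series (fun l => mseq mu l * r ^ l).
Proof.
  intros Hmu Hr.
  apply ex_series_Rabs. apply (ex_series_DAlembert _ r); [lra| |].
  - intros n. apply Rgt_not_eq. apply Rmult_lt_0_compat. apply mseq_pos; auto. apply pow_lt; lra.
  - apply is_lim_seq_ext with (u := fun n => r * (1 + (mu - 1) * / INR (S n))).
    + intros n. change (mseq mu (S n)) with (mseq mu n * ((mu + INR n) / INR (S n))).
      assert (H1 : 0 < mseq mu n) by (apply mseq_pos; auto).
      assert (H2 : 0 < INR (S n)) by (apply lt_0_INR; lia).
      assert (H3 : 0 < r ^ n) by (apply pow_lt; lra).
      rewrite Rabs_pos_eq.
      * rewrite S_INR in *. simpl pow. field. repeat split; lra.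
      * unfold Rdiv. apply Rmult_le_pos.
        -- apply Rmult_le_pos; [apply Rmult_le_pos|]; try lra.
           apply Rmult_le_pos; [pose proof (pos_INR n); lra|left; apply Rinv_0_lt_compat; auto].
           apply pow_le; lra.
        -- left; apply Rinv_0_lt_compat; apply Rmult_lt_0_compat; auto.
    + assert (L : is_lim_seq (fun n => r * (1 + (mu - 1) * / INR (S n))) (r * (1 + (mu - 1) * 0))).
      { apply is_lim_seq_mult'. apply is_lim_seq_const. apply is_lim_seq_plus'. apply is_lim_seq_const.
        apply is_lim_seq_mult'. apply is_lim_seq_const. apply lim_inv_S. }
      replace (r * (1 + (mu - 1) * 0)) with r in L by ring. exact L.
Qed.

Lemma mseq_series mu r : 0 < mu -> 0 <= r < 1 -> ex_series (fun l => mseq mu l * r ^ l).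
Proof.
  intros Hmu Hr.
  apply (ex_series_nn_le _ (fun l => mseq mu l * ((1 + r) / 2) ^ l)).
  - intros n. split.
    + apply Rmult_le_pos. left; apply mseq_pos; auto. apply pow_le; lra.
    + apply Rmult_le_compat_l. left; apply mseq_pos; auto. apply pow_incr; lra.
  - apply mseq_ratio_series; auto; lra.
Qed.

Lemma binom_abs_series w r : 0 <= r < 1 -> ex_series (fun l => Cmod (binomC w l) * r ^ l).
Proof.
  intros Hr. apply (ex_series_nn_le _ (fun l => mseq (Cmod w + 1) l * r ^ l)).
  - intros n; split. apply Rmult_le_pos. apply Cmod_ge_0. apply pow_le; lra.
    apply Rmult_le_compat_r. apply pow_le; lra. apply binomC_le.
  - apply mseq_series. pose proof (Cmod_ge_0 w); lra. auto.
Qed.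

Lemma im_le_Cmod c : Rabs (Im c) <= Cmod c.
Proof.
  destruct c as [x y]. unfold Cmod. simpl.
  rewrite <- sqrt_Rsqr_abs. apply sqrt_le_1_alt. unfold Rsqr. nra.
Qed.

Lemma radius_ge (a : nat -> R) (mu : R) t :
  0 < mu -> (forall n, Rabs (a n) <= mseq mu n) -> Rabs t < 1 -> Rbar_lt (Rabs t) (CV_radius a).
Proof.
  intros Hmu Ha Ht.
  set (r := (1 + Rabs t) / 2).
  assert (Hr : 0 <= r < 1) by (unfold r; pose proof (Rabs_pos t); lra).
  assert (Hle : Rbar_le r (CV_radius a)).
  { destruct (CV_radius_bounded a) as [Hub _]. apply Hub.
    exists (Series (fun l => mseq mu l * r ^ l)). intros n.
    rewrite Rabs_mult, <- RPow_abs, (Rabs_pos_eq r) by lra.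
    eapply Rle_trans; [|apply (term_nn_le (fun l => mseq mu l * r ^ l) n)].
    - apply Rmult_le_compat_r. apply pow_le; lra. apply Ha.
    - intros; apply Rmult_le_pos. left; apply mseq_pos; auto. apply pow_le; lra.
    - apply mseq_series; auto. }
  destruct (CV_radius a) as [x| |]; simpl in *; auto.
  unfold r in Hle; lra.
Qed.

Lemma ode_series (a c : nat -> R) t :
  Rbar_lt (Rabs t) (CV_radius a) ->
  (forall l, INR (S l) * a (S l) + INR l * a l = c l) ->
  is_series (fun l => c l * t ^ l) ((1 + t) * PSeries (PS_derive a) t).
Proof.
  intros Hr Hc.
  set (S1 := PSeries (PS_derive a) t).
  assert (HS1 : is_series (fun l => PS_derive a l * t ^ l) S1).
  { unfold S1, PSeries. apply Series_correct. apply ex_series_Rabs.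
    apply CV_disk_inside. rewrite CV_radius_derive; auto. }
  assert (Hsh : is_series (fun l => INR l * a l * t ^ l) (t * S1)).
  { apply is_series_decr_1.
    assert (H : is_series (fun k => t * (PS_derive a k * t ^ k)) (t * S1)).
    { apply (is_series_scal_l (V := R_NormedModule) t _ _ HS1). }
    match goal with |- is_series _ ?v => replace v with (t * S1) end.
    - eapply is_series_ext; [|exact H]. intros k. unfold PS_derive. simpl. ring.
    - unfold plus, opp; simpl. rewrite !Rmult_0_l, Ropp_0, Rplus_0_r. reflexivity. }
  replace ((1 + t) * S1) with (S1 + t * S1) by ring.
  eapply is_series_ext; [|apply (is_series_plus _ _ _ _ HS1 Hsh)].
  intros l. change (Rplus (PS_derive a l * t ^ l) (INR l * a l * t ^ l) = c l * t ^ l).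
  unfold PS_derive. rewrite <- Hc. ring.
Qed.

Section Binom.
Variable w : C.
Let p := Re w.
Let q := Im w.
Let ReB := fun l => Re (binomC w l).
Let ImB := fun l => Im (binomC w l).
Let mu := Cmod w + 1.

Lemma mu_pos : 0 < mu.
Proof. unfold mu; pose proof (Cmod_ge_0 w); lra. Qed.

Lemma ReB_le n : Rabs (ReB n) <= mseq mu n.
Proof. eapply Rle_trans; [apply re_le_Cmod|apply binomC_le]. Qed.
Lemma ImB_le n : Rabs (ImB n) <= mseq mu n.
Proof. eapply Rle_trans; [apply im_le_Cmod|apply binomC_le]. Qed.

Lemma coefRe l : INR (S l) * ReB (S l) + INR l * ReB l = p * ReB l - q * ImB l.
Proof.
  pose proof (binomC_S' w l) as E.
  apply (f_equal Re) in E. rewrite S_INR in *. unfold ReB, ImB, p, q.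
  destruct (binomC w (S l)) as [x1 y1], (binomC w l) as [x2 y2], w as [a b]. simpl in *.
  nra.
Qed.

Lemma coefIm l : INR (S l) * ImB (S l) + INR l * ImB l = q * ReB l + p * ImB l.
Proof.
  pose proof (binomC_S' w l) as E.
  apply (f_equal Im) in E. rewrite S_INR in *. unfold ReB, ImB, p, q.
  destruct (binomC w (S l)) as [x1 y1], (binomC w l) as [x2 y2], w as [a b]. simpl in *.
  nra.
Qed.

Let U := PSeries ReB.
Let V := PSeries ImB.

Lemma HU t : Rabs t < 1 -> is_series (fun l => ReB l * t ^ l) (U t).
Proof.
  intros Ht. unfold U, PSeries. apply Series_correct. apply ex_series_Rabs.
  apply CV_disk_inside. apply (radius_ge _ mu); auto. apply mu_pos. apply ReB_le.
Qed.
Lemma HV t : Rabs t < 1 -> is_series (fun l => ImB l * t ^ l) (V t).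
Proof.
  intros Ht. unfold V, PSeries. apply Series_correct. apply ex_series_Rabs.
  apply CV_disk_inside. apply (radius_ge _ mu); auto. apply mu_pos. apply ImB_le.
Qed.

Lemma dU t : Rabs t < 1 -> is_derive U t ((p * U t - q * V t) / (1 + t)).
Proof.
  intros Ht.
  assert (Hr : Rbar_lt (Rabs t) (CV_radius ReB)) by (apply (radius_ge _ mu); auto; [apply mu_pos|apply ReB_le]).
  assert (E : (1 + t) * PSeries (PS_derive ReB) t = p * U t - q * V t).
  { pose proof (ode_series ReB (fun l => p * ReB l - q * ImB l) t Hr coefRe) as H1.
    apply is_series_unique in H1. rewrite <- H1. apply is_series_unique.
    eapply is_series_ext; [|apply (is_series_minus (V:=R_NormedModule) _ _ _ _
        (is_series_scal_l (V:=R_NormedModule) p _ _ (HU t Ht)) (is_series_scal_l (V:=R_NormedModule) q _ _ (HV t Ht)))].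
    intros n. unfold plus, opp, scal; simpl. unfold mult; simpl. ring. }
  replace ((p * U t - q * V t) / (1 + t)) with (PSeries (PS_derive ReB) t).
  apply is_derive_PSeries; auto.
  rewrite <- E. assert (0 < 1 + t) by (apply Rabs_def2 in Ht; lra). field. lra.
Qed.

Lemma dV t : Rabs t < 1 -> is_derive V t ((q * U t + p * V t) / (1 + t)).
Proof.
  intros Ht.
  assert (Hr : Rbar_lt (Rabs t) (CV_radius ImB)) by (apply (radius_ge _ mu); auto; [apply mu_pos|apply ImB_le]).
  assert (E : (1 + t) * PSeries (PS_derive ImB) t = q * U t + p * V t).
  { pose proof (ode_series ImB (fun l => q * ReB l + p * ImB l) t Hr coefIm) as H1.
    apply is_series_unique in H1. rewrite <- H1. apply is_series_unique.
    eapply is_series_ext; [|apply (is_series_plus (V:=R_NormedModule) _ _ _ _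
        (is_series_scal_l (V:=R_NormedModule) q _ _ (HU t Ht)) (is_series_scal_l (V:=R_NormedModule) p _ _ (HV t Ht)))].
    intros n. unfold plus, scal; simpl. unfold mult; simpl. ring. }
  replace ((q * U t + p * V t) / (1 + t)) with (PSeries (PS_derive ImB) t).
  apply is_derive_PSeries; auto.
  rewrite <- E. assert (0 < 1 + t) by (apply Rabs_def2 in Ht; lra). field. lra.
Qed.


Let Ef := fun x => exp (- p * ln (1 + x)).
Let G1 := fun x => U x * (exp (- p * ln (1 + x)) * cos (- q * ln (1 + x))) - V x * (exp (- p * ln (1 + x)) * sin (- q * ln (1 + x))).
Let G2 := fun x => U x * (exp (- p * ln (1 + x)) * sin (- q * ln (1 + x))) + V x * (exp (- p * ln (1 + x)) * cos (- q * ln (1 + x))).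

Lemma dG1 x : Rabs x < 1 -> is_derive G1 x 0.
Proof.
  intros Hx. assert (H1 : 0 < 1 + x) by (apply Rabs_def2 in Hx; lra).
  unfold G1. auto_derive.
  - repeat split; auto; eexists; [apply dU|apply dV]; auto.
  - change (Derive (fun x0 => U x0) x) with (Derive U x).
    change (Derive (fun x0 => V x0) x) with (Derive V x).
    rewrite (is_derive_unique _ _ _ (dU x Hx)), (is_derive_unique _ _ _ (dV x Hx)).
    field. lra.
Qed.

Lemma dG2 x : Rabs x < 1 -> is_derive G2 x 0.
Proof.
  intros Hx. assert (H1 : 0 < 1 + x) by (apply Rabs_def2 in Hx; lra).
  unfold G2. auto_derive.
  - repeat split; auto; eexists; [apply dU|apply dV]; auto.
  - change (Derive (fun x0 => U x0) x) with (Derive U x).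
    change (Derive (fun x0 => V x0) x) with (Derive V x).
    rewrite (is_derive_unique _ _ _ (dU x Hx)), (is_derive_unique _ _ _ (dV x Hx)).
    field. lra.
Qed.

Lemma const_on (G : R -> R) t : (forall x, Rabs x < 1 -> is_derive G x 0) -> Rabs t < 1 -> G t = G 0.
Proof.
  intros HG Ht.
  destruct (MVT_gen G 0 t (fun _ => 0)) as [c [Hc E]].
  - intros x Hx. apply HG. apply Rabs_def1; unfold Rmin, Rmax in Hx; apply Rabs_def2 in Ht;
    destruct (Rle_dec 0 t); lra.
  - intros x Hx. apply continuity_pt_filterlim. apply (ex_derive_continuous G x).
    exists 0. apply HG. apply Rabs_def1; unfold Rmin, Rmax in Hx; apply Rabs_def2 in Ht;
    destruct (Rle_dec 0 t); lra.
  - lra.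
Qed.

Lemma binom_main t : Rabs t < 1 -> Cmult (U t, V t) (rpowC (1 + t) (Copp w)) = RtoC 1.
Proof.
  intros Ht.
  assert (E1 : G1 t = 1).
  { rewrite (const_on G1 t dG1 Ht). unfold G1. rewrite Rplus_0_r, ln_1, !Rmult_0_r, exp_0, cos_0, sin_0.
    unfold U, V. rewrite !PSeries_0. unfold ReB, ImB. rewrite binomC_0. simpl. ring. }
  assert (E2 : G2 t = 0).
  { rewrite (const_on G2 t dG2 Ht). unfold G2. rewrite Rplus_0_r, ln_1, !Rmult_0_r, exp_0, cos_0, sin_0.
    unfold U, V. rewrite !PSeries_0. unfold ReB, ImB. rewrite binomC_0. simpl. ring. }
  assert (Er : Re (Copp w) = - p) by reflexivity.
  assert (Ei : Im (Copp w) = - q) by reflexivity.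
  apply C_ext.
  - simpl Re at 2. transitivity (G1 t); [|exact E1]. unfold G1. unfold rpowC. rewrite Er, Ei. simpl. ring.
  - simpl Im at 2. transitivity (G2 t); [|exact E2]. unfold G2. unfold rpowC. rewrite Er, Ei. simpl. ring.
Qed.

Lemma binom_UV t : Rabs t < 1 -> (U t, V t) = rpowC (1 + t) w.
Proof.
  intros Ht.
  assert (E : Cmult (rpowC (1 + t) (Copp w)) (rpowC (1 + t) w) = RtoC 1).
  { rewrite <- rpowC_plus. replace (Cplus (Copp w) w) with (RtoC 0) by (apply C_ext; simpl; ring). apply rpowC_0. }
  transitivity (Cmult (Cmult (U t, V t) (rpowC (1 + t) (Copp w))) (rpowC (1 + t) w)).
  - rewrite <- Cmult_assoc, E. rewrite Cmult_1_r. reflexivity.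
  - rewrite binom_main; auto. rewrite Cmult_1_l. reflexivity.
Qed.

End Binom.

Lemma binomial_series w t : Rabs t < 1 ->
  CisS (fun l => Cmult (binomC w l) (RtoC (t ^ l))) (rpowC (1 + t) w).
Proof.
  intros Ht.
  assert (Hab : ex_series (fun l => Cmod (Cmult (binomC w l) (RtoC (t ^ l))))).
  { eapply ex_series_ext; [|apply (binom_abs_series w (Rabs t)); split; [apply Rabs_pos|auto]].
    intros n. simpl. rewrite Cmod_mult, Cmod_R, RPow_abs. reflexivity. }
  pose proof (CisS_abs _ Hab) as H. 
  replace (rpowC (1 + t) w) with (CSeries (fun l => Cmult (binomC w l) (RtoC (t ^ l)))); auto.
  rewrite <- binom_UV by auto. unfold CSeries, PSeries. f_equal; apply Series_ext; intros n; simpl; ring.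
Qed.


Lemma exp_le x y : x <= y -> exp x <= exp y.
Proof. intros [H|H]. left; apply exp_increasing; auto. subst; lra. Qed.

Lemma ln_le_m1 y : 0 < y -> ln y <= y - 1.
Proof. intros H. pose proof (exp_ineq1_le (ln y)). rewrite exp_ln in H0; auto. lra. Qed.

Lemma ln_nonneg y : 1 <= y -> 0 <= ln y.
Proof. intros H. rewrite <- ln_1. apply ln_le; lra. Qed.

Definition W (c sg : R) : R := exp (- sg * ln c).

Lemma W_pos c sg : 0 < W c sg.
Proof. apply exp_pos. Qed.

Lemma Cmod_rpowC_W c s : Cmod (rpowC c (Copp s)) = W c (Re s).
Proof. rewrite Cmod_rpowC. reflexivity. Qed.

Lemma W_plus_nat c sg l : 0 < c -> W c (sg + INR l) = W c sg * / c ^ l.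
Proof.
  intros Hc. unfold W. rewrite <- exp_negnat_ln by auto. rewrite <- exp_plus. f_equal. ring.
Qed.

Lemma W_mono_sg c sg sg' : 1 <= c -> sg <= sg' -> W c sg' <= W c sg.
Proof. intros Hc H. unfold W. apply exp_le. pose proof (ln_nonneg c Hc). nra. Qed.

Lemma W_mono_c c c' sg : 0 < c -> c <= c' -> 0 <= sg -> W c' sg <= W c sg.
Proof. intros Hc H Hs. unfold W. apply exp_le. pose proof (ln_le c c' Hc H). nra. Qed.

Lemma W_shift c sg N m : 1 <= c -> - INR N <= sg -> W (c + INR m) sg <= W c sg * (1 + INR m) ^ N.
Proof.
  intros Hc Hs. pose proof (pos_INR m) as Hm.
  assert (H1 : 1 <= (1 + INR m) ^ N) by (apply pow_R1_Rle; lra).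
  destruct (Rle_or_lt 0 sg) as [Hp|Hn].
  - pose proof (W_mono_c c (c + INR m) sg ltac:(lra) ltac:(lra) Hp).
    pose proof (W_pos c sg). nra.
  - rewrite <- exp_nat_ln by lra. unfold W. rewrite <- exp_plus. apply exp_le.
    assert (E : ln (c + INR m) <= ln c + ln (1 + INR m)).
    { rewrite <- ln_mult by lra. apply ln_le; nra. }
    pose proof (ln_nonneg (1 + INR m)). nra.
Qed.

Lemma lim_ratio_pow N : is_lim_seq (fun m => ((2 + INR m) / (1 + INR m)) ^ N) 1.
Proof.
  induction N.
  - simpl. apply is_lim_seq_const.
  - simpl.
    assert (L1 : is_lim_seq (fun m => (2 + INR m) / (1 + INR m)) 1).
    { apply is_lim_seq_ext with (u := fun m => 1 + / INR (S m)).
      + intros m. rewrite S_INR. field. pose proof (pos_INR m); lra.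
      + assert (L : is_lim_seq (fun m => 1 + / INR (S m)) (1 + 0)).
        { apply is_lim_seq_plus'. apply is_lim_seq_const. apply lim_inv_S. }
        rewrite Rplus_0_r in L. exact L. }
    pose proof (is_lim_seq_mult' _ _ _ _ L1 IHN) as L. rewrite Rmult_1_r in L. exact L.
Qed.

Lemma polygeom_pos x N : 0 < x < 1 -> ex_series (fun m => x ^ m * (1 + INR m) ^ N).
Proof.
  intros Hx. apply ex_series_Rabs. apply (ex_series_DAlembert _ x); [lra| |].
  - intros n. apply Rgt_not_eq. apply Rmult_lt_0_compat. apply pow_lt; lra.
    apply pow_lt. pose proof (pos_INR n); lra.
  - apply is_lim_seq_ext with (u := fun m => x * ((2 + INR m) / (1 + INR m)) ^ N).
    + intros n. pose proof (pos_INR n). rewrite S_INR.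
      assert (0 < x ^ n) by (apply pow_lt; lra).
      assert (0 < (1 + INR n) ^ N) by (apply pow_lt; lra).
      rewrite Rabs_pos_eq.
      * replace (1 + (INR n + 1)) with (2 + INR n) by ring. unfold Rdiv. rewrite Rpow_mult_distr, pow_inv.
        simpl pow. field. split; lra.
      * apply Rlt_le, Rdiv_lt_0_compat; apply Rmult_lt_0_compat; try apply pow_lt; lra.
    + assert (L : is_lim_seq (fun m => x * ((2 + INR m) / (1 + INR m)) ^ N) (x * 1)).
      { apply is_lim_seq_mult'. apply is_lim_seq_const. apply lim_ratio_pow. }
      rewrite Rmult_1_r in L. exact L.
Qed.

Lemma polygeom x N : 0 <= x < 1 -> ex_series (fun m => x ^ m * (1 + INR m) ^ N).
Proof.
  intros Hx. apply (ex_series_nn_le _ (fun m => ((1 + x) / 2) ^ m * (1 + INR m) ^ N)).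
  - intros n. pose proof (pos_INR n). split.
    + apply Rmult_le_pos; apply pow_le; lra.
    + apply Rmult_le_compat_r. apply pow_le; lra. apply pow_incr; lra.
  - apply polygeom_pos; lra.
Qed.

(* p-series telescoping *)
Lemma key_ineq y p : 1 < y -> 1 < p -> (p - 1) * W y p <= W (y - 1) (p - 1) - W y (p - 1).
Proof.
  intros Hy Hp.
  assert (E1 : W y p = W y (p - 1) * / y).
  { unfold W. rewrite <- (exp_ln (/ y)) by (apply Rinv_0_lt_compat; lra).
    rewrite <- exp_plus, ln_Rinv by lra. f_equal. ring. }
  assert (E2 : ln (y - 1) <= ln y - / y).
  { replace (y - 1) with (y * (1 - / y)) by (field; lra).
    assert (0 < / y < 1). { split. apply Rinv_0_lt_compat; lra. rewrite <- Rinv_1. apply Rinv_lt_contravar; lra. }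
    rewrite ln_mult by lra. pose proof (ln_le_m1 (1 - / y)). lra. }
  assert (E3 : W y (p - 1) * exp ((p - 1) * / y) <= W (y - 1) (p - 1)).
  { unfold W. rewrite <- exp_plus. apply exp_le. nra. }
  pose proof (exp_ineq1_le ((p - 1) * / y)).
  pose proof (W_pos y (p - 1)). rewrite E1. nra.
Qed.

Lemma pseries_bound c p : 1 <= c -> 1 < p ->
  ex_series (fun m => W (c + INR m) p) /\
  Series (fun m => W (c + INR m) p) <= W c (p - 1) * (1 + / (p - 1)).
Proof.
  intros Hc Hp.
  assert (Hpart : forall M, sum_n (fun m => W (c + INR m) p) M + W (c + INR M) (p - 1) / (p - 1)
                            <= W c p + W c (p - 1) / (p - 1)).
  { induction M.
    - rewrite sum_O. simpl. rewrite Rplus_0_r. lra.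
    - rewrite sum_Sn. change (sum_n (fun m => W (c + INR m) p) M + W (c + INR (S M)) p +
          W (c + INR (S M)) (p - 1) / (p - 1) <= W c p + W c (p - 1) / (p - 1)).
      pose proof (key_ineq (c + INR (S M)) p) as K.
      replace (c + INR (S M) - 1) with (c + INR M) in K by (rewrite S_INR; ring).
      assert (1 < c + INR (S M)) by (rewrite S_INR; pose proof (pos_INR M); lra).
      specialize (K H Hp).
      assert (K' : W (c + INR (S M)) p <= (W (c + INR M) (p - 1) - W (c + INR (S M)) (p - 1)) / (p - 1)).
      { apply (Rmult_le_reg_l (p - 1)). lra. unfold Rdiv. rewrite <- Rmult_assoc, Rinv_r_simpl_m by lra. auto. }
      unfold Rdiv in *. lra. }
  assert (Hnn : forall m, 0 <= W (c + INR m) p) by (intros; left; apply W_pos).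
  assert (Hb : forall M, sum_n (fun m => W (c + INR m) p) M <= W c p + W c (p - 1) / (p - 1)).
  { intros M. specialize (Hpart M). assert (0 <= W (c + INR M) (p - 1) / (p - 1)).
    { apply Rdiv_le_0_compat. left; apply W_pos. lra. } lra. }
  assert (Hex : ex_series (fun m => W (c + INR m) p)).
  { destruct (ex_finite_lim_seq_incr (sum_n (fun m => W (c + INR m) p)) (W c p + W c (p - 1) / (p - 1))) as [l Hl].
    - intros n. rewrite sum_Sn. change (sum_n (fun m => W (c + INR m) p) n <= sum_n (fun m => W (c + INR m) p) n + W (c + INR (S n)) p).
      specialize (Hnn (S n)). lra.
    - exact Hb.
    - exists l; exact Hl. }
  split; auto. eapply Rle_trans. apply series_le_bound; [exact Hb|exact Hex].
  pose proof (W_mono_sg c (p - 1) p Hc ltac:(lra)). unfold Rdiv. nra.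
Qed.

Lemma nat_above r : exists N : nat, r <= INR N.
Proof.
  destruct (archimed r) as [H _]. exists (Z.abs_nat (up r)).
  rewrite INR_IZR_INZ, Zabs2Nat.id_abs.
  apply Rle_trans with (IZR (up r)); [lra|apply IZR_le; lia].
Qed.

Definition Reg (z s0 : C) (k : nat) := Cmod z < 1 \/ (Cmod z = 1 /\ INR k < Re s0).
Definition ee (z : C) (k : nat) : R := if Rlt_dec (Cmod z) 1 then 0 else INR k.

Lemma Reg_pred z s0 k : Reg z s0 (S k) -> Reg z s0 k.
Proof. unfold Reg. rewrite S_INR. intros [H|[H1 H2]]; [left|right]; auto. split; auto; lra. Qed.

Lemma Reg_le1 z s0 k : Reg z s0 k -> Cmod z <= 1.
Proof. intros [H|[H _]]; lra. Qed.

Lemma ex_series_scal_R c (a : nat -> R) : ex_series a -> ex_series (fun n => c * a n).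
Proof. intros H. exact (ex_series_scal_l (V := R_NormedModule) c a H). Qed.

Lemma step_sum z s0 k : Reg z s0 (S k) ->
  exists K', 0 <= K' /\ forall sg c, Re s0 <= sg -> 1 <= c ->
    ex_series (fun m => Cmod z ^ m * W (c + INR m) (sg - ee z k)) /\
    Series (fun m => Cmod z ^ m * W (c + INR m) (sg - ee z k)) <= K' * W c (sg - ee z (S k)).
Proof.
  intros HR. unfold ee. destruct (Rlt_dec (Cmod z) 1) as [Hx|Hx].
  - destruct (nat_above (- Re s0)) as [N HN].
    assert (Hx0 : 0 <= Cmod z < 1) by (split; auto; apply Cmod_ge_0).
    exists (Series (fun m => Cmod z ^ m * (1 + INR m) ^ N)). split.
    + eapply Rle_trans; [|apply (term_nn_le _ 0)]. simpl. rewrite Rplus_0_r, pow1. lra.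
      intros n. apply Rmult_le_pos; apply pow_le. apply Cmod_ge_0. pose proof (pos_INR n); lra.
      apply polygeom; auto.
    + intros sg c Hsg Hc. rewrite !Rminus_0_r.
      assert (Hle : forall m, 0 <= Cmod z ^ m * W (c + INR m) sg <= W c sg * (Cmod z ^ m * (1 + INR m) ^ N)).
      { intros m. split. apply Rmult_le_pos. apply pow_le, Cmod_ge_0. left; apply W_pos.
        pose proof (W_shift c sg N m Hc ltac:(lra)). pose proof (pow_le (Cmod z) m (Cmod_ge_0 z)).
        assert (0 <= W (c + INR m) sg) by (left; apply W_pos). nra. }
      assert (Hex : ex_series (fun m => W c sg * (Cmod z ^ m * (1 + INR m) ^ N))).
      { apply ex_series_scal_R. apply polygeom; auto. }
      split. apply (ex_series_nn_le _ _ Hle Hex).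
      eapply Rle_trans. apply Series_le; [exact Hle|exact Hex]. rewrite Series_scal_l. lra.
  - destruct HR as [H|[H1 H2]]; [lra|].
    rewrite H1. set (d := Re s0 - INR (S k)).
    assert (Hd : 0 < d) by (unfold d; lra).
    exists (1 + / d). split. pose proof (Rinv_0_lt_compat d Hd); lra.
    intros sg c Hsg Hc.
    assert (Hp : 1 < sg - INR k) by (rewrite S_INR in *; unfold d in *; lra).
    destruct (pseries_bound c (sg - INR k) Hc Hp) as [Hex Hb].
    assert (E : forall m, 1 ^ m * W (c + INR m) (sg - INR k) = W (c + INR m) (sg - INR k)).
    { intros; rewrite pow1; ring. }
    split. eapply ex_series_ext; [|exact Hex]. intros; rewrite E; auto.
    rewrite (Series_ext _ _ E).
    eapply Rle_trans; [exact Hb|].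
    replace (sg - INR k - 1) with (sg - INR (S k)) by (rewrite S_INR; ring).
    rewrite Rmult_comm. apply Rmult_le_compat_r. left; apply W_pos.
    apply Rplus_le_compat_l. apply Rinv_le_contravar; auto. rewrite S_INR in *. unfold d in *. rewrite S_INR. lra.
Qed.

Lemma Phi_bound z s0 k : Reg z s0 k ->
  exists K, 0 <= K /\ forall s c, Re s0 <= Re s -> 1 <= c ->
    Cmod (PhiAux k z s c) <= K * W c (Re s - ee z k).
Proof.
  induction k as [|k IH]; intros HR.
  - exists 1. split. lra. intros s c Hs Hc. simpl PhiAux. rewrite Cmod_rpowC_W.
    unfold ee. destruct (Rlt_dec (Cmod z) 1); simpl; rewrite Rminus_0_r; lra.
  - destruct (IH (Reg_pred _ _ _ HR)) as [K [HK0 HK]].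
    destruct (step_sum z s0 k HR) as [K' [HK'0 HK']].
    exists (K * K'). split. apply Rmult_le_pos; auto.
    intros s c Hs Hc. destruct (HK' (Re s) c Hs Hc) as [Hex Hb].
    assert (Hle : forall m, Cmod (Cmult (Cpow z m) (PhiAux k z s (c + INR m))) <= K * (Cmod z ^ m * W (c + INR m) (Re s - ee z k))).
    { intros m. rewrite Cmod_mult, Cmod_pow.
      pose proof (HK s (c + INR m) Hs ltac:(pose proof (pos_INR m); lra)).
      pose proof (pow_le (Cmod z) m (Cmod_ge_0 z)). nra. }
    assert (Hex2 : ex_series (fun m => K * (Cmod z ^ m * W (c + INR m) (Re s - ee z k)))) by (apply ex_series_scal_R; auto).
    assert (HC : CisS (fun m => Cmult (Cpow z m) (PhiAux k z s (c + INR m))) (PhiAux (S k) z s c)).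
    { apply CisS_abs. apply (ex_series_nn_le _ _ (fun m => conj (Cmod_ge_0 _) (Hle m)) Hex2). }
    eapply Rle_trans. eapply CisS_norm_le; [exact HC|exact Hle|apply Series_correct; exact Hex2].
    rewrite Series_scal_l. rewrite Rmult_assoc. apply Rmult_le_compat_l; auto.
Qed.

Lemma Phi_conv z s0 k s c : Reg z s0 (S k) -> Re s0 <= Re s -> 0 < c ->
  CisS (fun m => Cmult (Cpow z m) (PhiAux k z s (c + INR m))) (PhiAux (S k) z s c).
Proof.
  intros HR Hs Hc.
  destruct (Phi_bound z s0 k (Reg_pred _ _ _ HR)) as [K [HK0 HK]].
  destruct (step_sum z s0 k HR) as [K' [HK'0 HK']].
  destruct (HK' (Re s) (c + 1) Hs ltac:(lra)) as [Hex _].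
  apply CisS_abs. apply (ex_series_incr_1 (V := R_NormedModule) (fun m => Cmod (Cmult (Cpow z m) (PhiAux k z s (c + INR m))))).
  apply (ex_series_nn_le _ (fun m => K * (Cmod z ^ m * W (c + 1 + INR m) (Re s - ee z k)))).
  - intros m. split. apply Cmod_ge_0. rewrite Cmod_mult, Cmod_pow.
    replace (c + INR (S m)) with (c + 1 + INR m) by (rewrite S_INR; ring).
    pose proof (HK s (c + 1 + INR m) Hs ltac:(pose proof (pos_INR m); lra)).
    assert (Hx : Cmod z ^ S m <= Cmod z ^ m).
    { simpl. pose proof (Reg_le1 _ _ _ HR). pose proof (pow_le (Cmod z) m (Cmod_ge_0 z)).
      pose proof (Cmod_ge_0 z). nra. }
    pose proof (pow_le (Cmod z) (S m) (Cmod_ge_0 z)).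
    pose proof (W_pos (c + 1 + INR m) (Re s - ee z k)).
    pose proof (Cmod_ge_0 (PhiAux k z s (c + 1 + INR m))). nra.
  - apply ex_series_scal_R; auto.
Qed.

Lemma CSeries_ext a b : (forall n, a n = b n) -> CSeries a = CSeries b.
Proof. intros H. unfold CSeries. f_equal; apply Series_ext; intros n; rewrite H; auto. Qed.

Lemma Rm3 (a b c : R) : a * b * c = c * a * b.
Proof. ring. Qed.

Lemma Re_plus_nat s l : Re (Cplus s (RtoC (INR l))) = Re s + INR l.
Proof. destruct s; simpl; reflexivity. Qed.

Lemma rpowC_shift c s l : 0 < c ->
  rpowC c (Copp (Cplus s (RtoC (INR l)))) = Cmult (rpowC c (Copp s)) (RtoC (/ c ^ l)).
Proof.
  intros Hc. replace (Copp (Cplus s (RtoC (INR l)))) with (Cplus (Copp s) (RtoC (- INR l)))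
    by (apply C_ext; simpl; ring).
  rewrite rpowC_plus, rpowC_real, exp_negnat_ln; auto.
Qed.

Lemma Phi_expand z s0 k : Reg z s0 k -> forall s c a, Re s0 <= Re s -> 1 <= c -> Rabs a < c ->
  CisS (fun l => Cmult (Cmult (binomC (Copp s) l) (RtoC (a ^ l))) (PhiAux k z (Cplus s (RtoC (INR l))) c))
       (PhiAux k z s (c + a)).
Proof.
  induction k as [|k IH]; intros HR s c a Hs Hc Ha.
  - simpl PhiAux.
    assert (Hac : Rabs (a / c) < 1).
    { unfold Rdiv. rewrite Rabs_mult, Rabs_inv, (Rabs_pos_eq c) by lra.
      apply (Rmult_lt_reg_r c); [lra|]. rewrite Rmult_assoc, Rinv_l, Rmult_1_r, Rmult_1_l by lra. auto. }
    assert (E : c + a = c * (1 + a / c)) by (field; lra).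
    rewrite E, rpowC_mulbase.
    2: lra.
    2: { apply Rabs_def2 in Hac. lra. }
    pose proof (CisS_scal (rpowC c (Copp s)) _ _ (binomial_series (Copp s) (a / c) Hac)) as H.
    eapply CisS_ext; [|exact H]. intros l. simpl.
    rewrite rpowC_shift by lra. unfold Rdiv. rewrite Rpow_mult_distr, pow_inv, RtoC_mult.
    ring.
  - destruct (Phi_bound z s0 k (Reg_pred _ _ _ HR)) as [K [HK0 HK]].
    destruct (step_sum z s0 k HR) as [K' [HK'0 HK']].
    set (r := Rabs a / c).
    assert (Hr : 0 <= r < 1).
    { unfold r. split. apply Rdiv_le_0_compat; [apply Rabs_pos|lra].
      apply (Rmult_lt_reg_r c); [lra|]. unfold Rdiv. rewrite Rmult_assoc, Rinv_l, Rmult_1_r, Rmult_1_l by lra. auto. }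
    set (A := fun i j => Cmult (Cpow z i) (Cmult (Cmult (binomC (Copp s) j) (RtoC (a ^ j)))
                          (PhiAux k z (Cplus s (RtoC (INR j))) (c + INR i)))).
    set (b := fun i j => (Cmod z ^ i * W (c + INR i) (Re s - ee z k)) * K * (Cmod (binomC (Copp s) j) * r ^ j)).
    destruct (HK' (Re s) c Hs Hc) as [Hex _].
    assert (HM := binom_abs_series (Copp s) r Hr).
    set (M := Series (fun j => Cmod (binomC (Copp s) j) * r ^ j)).
    destruct (fubini A b) as [Sv [H1 H2]].
    + intros i j. unfold A, b. rewrite !Cmod_mult, Cmod_pow, Cmod_R, <- RPow_abs.
      assert (Hci : 1 <= c + INR i) by (pose proof (pos_INR i); lra).
      pose proof (HK (Cplus s (RtoC (INR j))) (c + INR i)) as HB.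
      rewrite Re_plus_nat in HB. specialize (HB ltac:(pose proof (pos_INR j); lra) Hci).
      replace (Re s + INR j - ee z k) with ((Re s - ee z k) + INR j) in HB by ring.
      rewrite W_plus_nat in HB by lra.
      assert (Hpow : Rabs a ^ j * / (c + INR i) ^ j <= r ^ j).
      { unfold r. rewrite <- pow_inv, <- Rpow_mult_distr. apply pow_incr. split.
        apply Rmult_le_pos. apply Rabs_pos. left; apply Rinv_0_lt_compat; lra.
        unfold Rdiv. apply Rmult_le_compat_l. apply Rabs_pos. apply Rinv_le_contravar; pose proof (pos_INR i); lra. }
      pose proof (W_pos (c + INR i) (Re s - ee z k)) as HW.
      pose proof (pow_le (Cmod z) i (Cmod_ge_0 z)).
      pose proof (pow_le (Rabs a) j (Rabs_pos a)).
      pose proof (Cmod_ge_0 (binomC (Copp s) j)).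
      pose proof (Cmod_ge_0 (PhiAux k z (Cplus s (RtoC (INR j))) (c + INR i))).
      assert (Hinv : 0 <= / (c + INR i) ^ j) by (left; apply Rinv_0_lt_compat, pow_lt; lra).
      set (X := Cmod (PhiAux k z (Cplus s (RtoC (INR j))) (c + INR i))) in *.
      set (Y := W (c + INR i) (Re s - ee z k)) in *.
      set (B := Cmod (binomC (Copp s) j)) in *.
      assert (T1 : Rabs a ^ j * X <= K * Y * r ^ j).
      { eapply Rle_trans. apply Rmult_le_compat_l; [auto|exact HB].
        replace (Rabs a ^ j * (K * (Y * / (c + INR i) ^ j))) with (K * Y * (Rabs a ^ j * / (c + INR i) ^ j)) by ring.
        apply Rmult_le_compat_l; auto. apply Rmult_le_pos; lra. }
      apply Rle_trans with (Cmod z ^ i * (B * (Rabs a ^ j * X))). right; ring.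
      apply Rle_trans with (Cmod z ^ i * (B * (K * Y * r ^ j))).
      apply Rmult_le_compat_l; auto. apply Rmult_le_compat_l; auto. right; ring.
    + intros i. unfold b. apply ex_series_scal_R. exact HM.
    + apply (ex_series_ext (V := R_NormedModule) (fun i => (K * M) * (Cmod z ^ i * W (c + INR i) (Re s - ee z k)))).
      { intros i. unfold b. rewrite Series_scal_l. unfold M. apply Rm3. }
      apply ex_series_scal_R. exact Hex.
    +
      assert (HS1 : Sv = PhiAux (S k) z s (c + a)).
      { apply (CisS_unique (fun i => Cmult (Cpow z i) (PhiAux k z s (c + a + INR i)))).
        - eapply CisS_ext; [|exact H1]. intros i. unfold A.
          rewrite (CSeries_CisS _ _ (CisS_scal (Cpow z i) _ _ (IH (Reg_pred _ _ _ HR) s (c + INR i) a Hs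
                       ltac:(pose proof (pos_INR i); lra) ltac:(pose proof (pos_INR i); lra)))).
          f_equal. f_equal. ring.
        - apply (Phi_conv z s0 k); auto. apply Rabs_def2 in Ha. lra. }
      rewrite <- HS1.
      eapply CisS_ext; [|exact H2]. intros j.
      pose proof (Phi_conv z s0 k (Cplus s (RtoC (INR j))) c HR ltac:(rewrite Re_plus_nat; pose proof (pos_INR j); lra) ltac:(lra)) as HC.
      pose proof (CisS_scal (Cmult (binomC (Copp s) j) (RtoC (a ^ j))) _ _ HC) as HC'.
      rewrite <- (CSeries_CisS _ _ HC'). unfold A. apply CSeries_ext. intros i. ring.
Qed.

Lemma Rm4 (a b c : R) : a * b * c = a * c * b.
Proof. ring. Qed.

Lemma CisS_comp a lr li : is_series (fun n => Re (a n)) lr -> is_series (fun n => Im (a n)) li -> CisS a (lr, li).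
Proof.
  intros Hr Hi. unfold CisS, is_series. apply filterlim_locally. intros eps.
  pose proof (proj1 (filterlim_locally _ _) Hr eps) as Hr'.
  pose proof (proj1 (filterlim_locally _ _) Hi eps) as Hi'.
  generalize (filter_and _ _ Hr' Hi'). apply filter_imp. intros n [H1 H2].
  split.
  - change (ball lr eps (Re (@sum_n (NormedModule.AbelianMonoid _ C_NormedModule) a n))). rewrite sum_n_Re. exact H1.
  - change (ball li eps (Im (@sum_n (NormedModule.AbelianMonoid _ C_NormedModule) a n))). rewrite sum_n_Im. exact H2.
Qed.

Lemma is_series_zero : is_series (fun _ : nat => 0) 0.
Proof.
  assert (H : Rabs (1/2) < 1) by (rewrite Rabs_pos_eq; lra).
  pose proof (is_series_scal_l (V := R_NormedModule) 0 _ _ (is_series_geom _ H)) as H0.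
  eapply is_series_ext; [|]. 2: {
  match type of H0 with is_series _ ?v => replace v with 0 in H0 end. exact H0.
  unfold scal; simpl; unfold mult; simpl; ring. }
  intros n. unfold scal; simpl; unfold mult; simpl; ring.
Qed.

Lemma CisS_RtoC (u : nat -> R) L : is_series u L -> CisS (fun n => RtoC (u n)) (RtoC L).
Proof.
  intros H. apply CisS_comp. exact H. exact is_series_zero.
Qed.

Lemma geom_S rho : 0 <= rho < 1 -> is_series (fun n => rho ^ S n) (rho / (1 - rho)).
Proof.
  intros Hr. assert (H : Rabs rho < 1) by (rewrite Rabs_pos_eq; lra).
  pose proof (is_series_scal_l (V := R_NormedModule) rho _ _ (is_series_geom _ H)) as H0.
  replace (rho / (1 - rho)) with (scal rho (/ (1 - rho))). 
  eapply is_series_ext; [|exact H0]. intros n. reflexivity.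
  unfold scal; simpl; unfold mult; simpl. unfold Rdiv. reflexivity.
Qed.

Definition aq (q : R) (n : nat) := / q ^ S n.

Lemma aq_bounds q n : 1 < q -> 0 < aq q n <= / q.
Proof.
  intros Hq. unfold aq. split. apply Rinv_0_lt_compat, pow_lt; lra.
  apply Rinv_le_contravar. lra. simpl. rewrite <- (Rmult_1_r q) at 1.
  apply Rmult_le_compat_l. lra. apply pow_R1_Rle. lra.
Qed.

Lemma aq_series q l : 1 < q -> is_series (fun n => aq q n ^ S l) (/ (q ^ S l - 1)).
Proof.
  intros Hq.
  assert (Hql : 1 < q ^ S l) by (apply Rlt_pow_R1; [lra|lia]).
  set (rho := / q ^ S l).
  assert (Hr : 0 <= rho < 1).
  { unfold rho. split. left; apply Rinv_0_lt_compat; lra. rewrite <- Rinv_1. apply Rinv_lt_contravar; lra. }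
  pose proof (geom_S rho Hr) as H.
  replace (/ (q ^ S l - 1)) with (rho / (1 - rho)) by (unfold rho; field; lra).
  eapply is_series_ext; [|exact H]. intros n. unfold aq, rho.
  rewrite <- !pow_inv, <- !pow_mult. f_equal. lia.
Qed.

Lemma jackson_jt q f V : CisS (fun n => Cmult (f (aq q n)) (RtoC (aq q n))) V -> jackson q f = Cmult (RtoC (q - 1)) V.
Proof. intros H. unfold jackson. f_equal. apply CSeries_CisS. exact H. Qed.

Lemma jackson_ext q f g : (forall n, f (aq q n) = g (aq q n)) -> jackson q f = jackson q g.
Proof. intros H. unfold jackson. f_equal. apply CSeries_ext. intros n. unfold aq in H. rewrite H. auto. Qed.

Lemma jackson_Phi q z s0 k s c eps : 1 < q -> Reg z s0 k -> Re s0 <= Re s -> 1 <= c -> Rabs eps = 1 ->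
  exists Sv, CisS (fun n => Cmult (PhiAux k z s (c + eps * aq q n)) (RtoC (aq q n))) Sv /\
  CisS (fun l => Cmult (Cmult (Cmult (binomC (Copp s) l) (RtoC (eps ^ l))) (PhiAux k z (Cplus s (RtoC (INR l))) c))
                       (RtoC (/ ((q ^ S l - 1) / (q - 1)))))
       (Cmult (RtoC (q - 1)) Sv).
Proof.
  intros Hq HR Hs Hc Heps.
  destruct (Phi_bound z s0 k HR) as [K [HK0 HK]].
  assert (Hqi : 0 <= / q < 1).
  { split. left; apply Rinv_0_lt_compat; lra. rewrite <- Rinv_1. apply Rinv_lt_contravar; lra. }
  set (A := fun n l => Cmult (Cmult (Cmult (binomC (Copp s) l) (RtoC ((eps * aq q n) ^ l)))
                        (PhiAux k z (Cplus s (RtoC (INR l))) c)) (RtoC (aq q n))).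
  set (KW := K * W c (Re s - ee z k)).
  assert (HKW : 0 <= KW) by (unfold KW; apply Rmult_le_pos; auto; left; apply W_pos).
  set (b := fun n l => (KW * aq q n) * (Cmod (binomC (Copp s) l) * (/ q) ^ l)).
  assert (HM := binom_abs_series (Copp s) (/ q) Hqi).
  set (M := Series (fun l => Cmod (binomC (Copp s) l) * (/ q) ^ l)).
  assert (Haqs : ex_series (aq q)).
  { exists (/ (q ^ S 0 - 1)). eapply is_series_ext; [|apply (aq_series q 0 Hq)]. intros n. simpl. ring. }
  destruct (fubini A b) as [Sv [H1 H2]].
  - intros n l. unfold A, b.
    destruct (aq_bounds q n Hq) as [Ha1 Ha2].
    rewrite !Cmod_mult, !Cmod_R, <- RPow_abs, Rabs_mult, Heps, Rmult_1_l, (Rabs_pos_eq (aq q n)) by lra.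
    pose proof (HK (Cplus s (RtoC (INR l))) c) as HB.
    rewrite Re_plus_nat in HB. specialize (HB ltac:(pose proof (pos_INR l); lra) Hc).
    replace (Re s + INR l - ee z k) with ((Re s - ee z k) + INR l) in HB by ring.
    rewrite W_plus_nat in HB by lra.
    assert (Hcl : / c ^ l <= 1).
    { rewrite <- (Rinv_1). apply Rinv_le_contravar. lra. apply pow_R1_Rle; lra. }
    assert (HB' : Cmod (PhiAux k z (Cplus s (RtoC (INR l))) c) <= KW).
    { eapply Rle_trans; [exact HB|]. unfold KW. pose proof (W_pos c (Re s - ee z k)).
      rewrite <- Rmult_assoc. rewrite <- (Rmult_1_r (K * W c (Re s - ee z k))) at 2.
      apply Rmult_le_compat_l; [apply Rmult_le_pos; lra|exact Hcl]. }
    assert (Hpw : aq q n ^ l <= (/ q) ^ l) by (apply pow_incr; lra).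
    pose proof (Cmod_ge_0 (binomC (Copp s) l)).
    pose proof (Cmod_ge_0 (PhiAux k z (Cplus s (RtoC (INR l))) c)).
    pose proof (pow_le (aq q n) l ltac:(lra)).
    set (B := Cmod (binomC (Copp s) l)) in *.
    set (X := Cmod (PhiAux k z (Cplus s (RtoC (INR l))) c)) in *.
    apply Rle_trans with (B * (aq q n ^ l * X) * aq q n). right; ring.
    apply Rle_trans with (B * ((/ q) ^ l * KW) * aq q n).
    + apply Rmult_le_compat_r. lra. apply Rmult_le_compat_l. auto.
      apply Rmult_le_compat; auto.
    + right. ring.
  - intros n. unfold b. apply ex_series_scal_R. exact HM.
  - apply (ex_series_ext (V := R_NormedModule) (fun n => (KW * M) * aq q n)).
    { intros n. unfold b. rewrite Series_scal_l. unfold M. apply Rm4. }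
    apply ex_series_scal_R. exact Haqs.
  - exists Sv.
    assert (HJ : CisS (fun n => Cmult (PhiAux k z s (c + eps * aq q n)) (RtoC (aq q n))) Sv).
    { eapply CisS_ext; [|exact H1]. intros n.
      destruct (aq_bounds q n Hq) as [Ha1 Ha2].
      assert (Hea : Rabs (eps * aq q n) < c).
      { rewrite Rabs_mult, Heps, Rabs_pos_eq by lra. assert (/ q < 1) by lra. lra. }
      pose proof (CisS_scal (RtoC (aq q n)) _ _ (Phi_expand z s0 k HR s c (eps * aq q n) Hs Hc Hea)) as HE.
      assert (HE' : CisS (A n) (Cmult (RtoC (aq q n)) (PhiAux k z s (c + eps * aq q n)))).
      { eapply CisS_ext; [|exact HE]. intros l. unfold A. ring. }
      rewrite (CSeries_CisS _ _ HE'). ring. }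
    split; auto.
    assert (HA : forall l, CisS (fun n => A n l)
                  (Cmult (Cmult (Cmult (binomC (Copp s) l) (RtoC (eps ^ l))) (PhiAux k z (Cplus s (RtoC (INR l))) c))
                         (RtoC (/ (q ^ S l - 1))))).
    { intros l. pose proof (CisS_scal (Cmult (Cmult (binomC (Copp s) l) (RtoC (eps ^ l))) (PhiAux k z (Cplus s (RtoC (INR l))) c))
                   _ _ (CisS_RtoC _ _ (aq_series q l Hq))) as HH.
      eapply CisS_ext; [|exact HH]. intros n. unfold A. simpl pow. rewrite Rpow_mult_distr, !RtoC_mult. ring. }
    assert (H3 : CisS (fun l => Cmult (Cmult (Cmult (binomC (Copp s) l) (RtoC (eps ^ l))) (PhiAux k z (Cplus s (RtoC (INR l))) c))
                         (RtoC (/ (q ^ S l - 1)))) Sv).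
    { eapply CisS_ext; [|exact H2]. intros l. apply CSeries_CisS. apply HA. }
    pose proof (CisS_scal (RtoC (q - 1)) _ _ H3) as H4.
    eapply CisS_ext; [|exact H4]. intros l.
    assert (Hql : 1 < q ^ S l) by (apply Rlt_pow_R1; [lra|lia]).
    replace (/ ((q ^ S l - 1) / (q - 1))) with ((q - 1) * / (q ^ S l - 1)) by (field; lra).
    rewrite RtoC_mult. ring.
Qed.

Lemma Li_series_eq z s j c m :
  Cmult (Cpow z (S m)) (Cmult (Cpow z j) (PhiAux j z s (c + INR (S m) + INR j))) =
  Cmult (Cpow z (S j)) (Cmult (Cpow z m) (PhiAux j z s (c + INR (S j) + INR m))).
Proof.
  replace (c + INR (S m) + INR j) with (c + INR (S j) + INR m) by (rewrite !S_INR; ring).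
  rewrite !Cmult_assoc, <- !Cpow_add_r. replace (S m + j)%nat with (S j + m)%nat by lia. reflexivity.
Qed.

Lemma LiPhi z s0 j : Reg z s0 j -> forall s c, Re s0 <= Re s -> 0 <= c ->
  LiAux j z s c = Cmult (Cpow z j) (PhiAux j z s (c + INR j)).
Proof.
  induction j as [|j IH]; intros HR s c Hs Hc.
  - simpl. rewrite Rplus_0_r. ring.
  - change (LiAux (S j) z s c) with (CSeries (fun m => Cmult (Cpow z (S m)) (LiAux j z s (c + INR (S m))))).
    pose proof (CisS_scal (Cpow z (S j)) _ _ (Phi_conv z s0 j s (c + INR (S j)) HR Hs
                   ltac:(pose proof (pos_INR (S j)); pose proof (lt_0_INR (S j) ltac:(lia)); lra))) as H.
    apply CSeries_CisS. eapply CisS_ext; [|exact H]. intros m.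
    rewrite (IH (Reg_pred _ _ _ HR) s (c + INR (S m)) Hs ltac:(pose proof (pos_INR (S m)); lra)).
    symmetry. apply Li_series_eq.
Qed.

Lemma LiConv z s0 j s c : Reg z s0 (S j) -> Re s0 <= Re s -> 0 <= c ->
  CisS (fun m => Cmult (Cpow z (S m)) (LiAux j z s (c + INR (S m)))) (LiAux (S j) z s c).
Proof.
  intros HR Hs Hc.
  rewrite (LiPhi z s0 (S j) HR s c Hs Hc).
  pose proof (CisS_scal (Cpow z (S j)) _ _ (Phi_conv z s0 j s (c + INR (S j)) HR Hs
                 ltac:(pose proof (pos_INR (S j)); pose proof (lt_0_INR (S j) ltac:(lia)); lra))) as H.
  eapply CisS_ext; [|exact H]. intros m.
  rewrite (LiPhi z s0 j (Reg_pred _ _ _ HR) s (c + INR (S m)) Hs ltac:(pose proof (pos_INR (S m)); lra)).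
  symmetry. apply Li_series_eq.
Qed.

Lemma qnum_nat q l : 1 < q -> qnum q (RtoC (INR (l + 1))) = RtoC ((q ^ S l - 1) / (q - 1)).
Proof.
  intros Hq. unfold qnum. rewrite rpowC_real, exp_nat_ln by lra.
  replace (l + 1)%nat with (S l) by lia.
  rewrite <- RtoC_minus, <- RtoC_div by lra. reflexivity.
Qed.

Lemma Cdiv_R x y : y <> 0 -> Cdiv x (RtoC y) = Cmult x (RtoC (/ y)).
Proof. intros H. unfold Cdiv. rewrite RtoC_inv by auto. reflexivity. Qed.

Lemma term_eq q k z s l (e : C) : 1 < q -> Reg z s k ->
  Cdiv (Cmult e (Li k z (Cplus s (RtoC (INR l))))) (qnum q (RtoC (INR (l + 1)))) =
  Cmult (Cpow z k) (Cmult (Cmult e (PhiAux k z (Cplus s (RtoC (INR l))) (INR k))) (RtoC (/ ((q ^ S l - 1) / (q - 1))))).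
Proof.
  intros Hq HR. unfold Li.
  rewrite (LiPhi z s k HR (Cplus s (RtoC (INR l))) 0) by (try rewrite Re_plus_nat; pose proof (pos_INR l); lra).
  rewrite Rplus_0_l, qnum_nat by auto. rewrite Cdiv_R.
  2: { assert (1 < q ^ S l) by (apply Rlt_pow_R1; [lra|lia]). apply Rgt_not_eq. apply Rdiv_lt_0_compat; lra. }
  ring.
Qed.

Lemma part23 q k z s eps : 1 < q -> (0 < k)%nat -> z <> RtoC 0 -> Reg z s k -> Rabs eps = 1 ->
  jackson q (fun a => Phi k z s (INR k + eps * a)) =
  Cmult (Cinv (Cpow z k)) (CSeries (fun l => Cdiv (Cmult (Cmult (binomC (Copp s) l) (RtoC (eps ^ l)))
             (Li k z (Cplus s (RtoC (INR l))))) (qnum q (RtoC (INR (l + 1)))))).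
Proof.
  intros Hq Hk Hz HR Heps.
  assert (Hc : 1 <= INR k) by (apply (le_INR 1); lia).
  destruct (jackson_Phi q z s k s (INR k) eps Hq HR (Rle_refl _) Hc Heps) as [Sv [H1 H2]].
  rewrite (jackson_jt q _ Sv H1).
  pose proof (CisS_scal (Cpow z k) _ _ H2) as H3.
  rewrite (CSeries_CisS _ (Cmult (Cpow z k) (Cmult (RtoC (q - 1)) Sv))).
  - field. apply Cpow_nz. exact Hz.
  - eapply CisS_ext; [|exact H3]. intros l. simpl. rewrite term_eq by auto. reflexivity.
Qed.


Fixpoint csum (f : nat -> C) (n : nat) : C :=
  match n with O => f O | S n' => Cplus (csum f n') (f (S n')) end.

Lemma csum_ext_loc f g n : (forall j, (j <= n)%nat -> f j = g j) -> csum f n = csum g n.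
Proof.
  induction n; intros H; simpl. apply H; lia.
  rewrite IHn by (intros; apply H; lia). rewrite H by lia. reflexivity.
Qed.

Lemma csum_shift g n : csum g (S n) = Cplus (g O) (csum (fun j => g (S j)) n).
Proof.
  induction n. simpl. reflexivity.
  change (csum g (S (S n))) with (Cplus (csum g (S n)) (g (S (S n)))).
  rewrite IHn. simpl. ring.
Qed.

Lemma csum_rev g n : csum g n = csum (fun r => g (n - r)%nat) n.
Proof.
  induction n. simpl. reflexivity.
  rewrite (csum_shift (fun r => g (S n - r)%nat)).
  change (csum g (S n)) with (Cplus (csum g n) (g (S n))).
  rewrite IHn. replace (S n - 0)%nat with (S n) by lia. simpl. ring.
Qed.

Lemma csum_mult_l w f n : Cmult w (csum f n) = csum (fun j => Cmult w (f j)) n.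
Proof. induction n; simpl. reflexivity. rewrite <- IHn. ring. Qed.

Lemma csum_plus f g n : csum (fun j => Cplus (f j) (g j)) n = Cplus (csum f n) (csum g n).
Proof. induction n; simpl. reflexivity. rewrite IHn. ring. Qed.

Lemma CisS_csum (F : nat -> nat -> C) (V : nat -> C) n :
  (forall j, (j <= n)%nat -> CisS (F j) (V j)) -> CisS (fun m => csum (fun j => F j m) n) (csum V n).
Proof.
  induction n; intros H; simpl. apply H; lia.
  apply CisS_plus. apply IHn; intros; apply H; lia. apply H; lia.
Qed.

Lemma Cbin_0 k : Binomial.C k 0 = 1.
Proof. unfold Binomial.C. rewrite Nat.sub_0_r. simpl. field. apply INR_fact_neq_0. Qed.

Lemma Cbin_sym k r : (r <= k)%nat -> Binomial.C k (k - r) = Binomial.C k r.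
Proof. intros H. unfold Binomial.C. replace (k - (k - r))%nat with r by lia. rewrite (Rmult_comm (INR (fact (k - r)))). reflexivity. Qed.

Lemma pascal_csum (f : nat -> C) k :
  csum (fun j => Cmult (RtoC (Binomial.C k j)) (Cplus (f j) (f (S j)))) k =
  csum (fun j => Cmult (RtoC (Binomial.C (S k) j)) (f j)) (S k).
Proof.
  rewrite csum_shift.
  rewrite (csum_ext_loc (fun j => Cmult (RtoC (Binomial.C k j)) (Cplus (f j) (f (S j))))
             (fun j => Cplus (Cmult (RtoC (Binomial.C k j)) (f j)) (Cmult (RtoC (Binomial.C k j)) (f (S j))))) by (intros; ring).
  rewrite csum_plus.
  rewrite (csum_ext_loc (fun j => Cmult (RtoC (Binomial.C (S k) (S j))) (f (S j)))
             (fun j => Cplus (Cmult (RtoC (Binomial.C k j)) (f (S j)))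
                             (if Nat.ltb j k then Cmult (RtoC (Binomial.C k (S j))) (f (S j)) else RtoC 0))).
  2: { intros j Hj. destruct (Nat.ltb j k) eqn:E.
       - apply Nat.ltb_lt in E. rewrite <- (pascal k j E), RtoC_plus. ring.
       - assert (j = k) by (apply Nat.ltb_ge in E; lia). subst. rewrite !C_n_n. ring. }
  rewrite csum_plus.
  assert (Q : csum (fun j => Cmult (RtoC (Binomial.C k j)) (f j)) k =
              Cplus (Cmult (RtoC (Binomial.C (S k) 0)) (f O))
                    (csum (fun j => if Nat.ltb j k then Cmult (RtoC (Binomial.C k (S j))) (f (S j)) else RtoC 0) k)).
  { destruct k as [|k'].
    - simpl. rewrite !Cbin_0. ring.
    - rewrite csum_shift. change (csum (fun j => if Nat.ltb j (S k') then Cmult (RtoC (Binomial.C (S k') (S j))) (f (S j)) else RtoC 0) (S k'))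
        with (Cplus (csum (fun j => if Nat.ltb j (S k') then Cmult (RtoC (Binomial.C (S k') (S j))) (f (S j)) else RtoC 0) k')
                    (if Nat.ltb (S k') (S k') then Cmult (RtoC (Binomial.C (S k') (S (S k')))) (f (S (S k'))) else RtoC 0)).
      rewrite Nat.ltb_irrefl, !Cbin_0.
      rewrite (csum_ext_loc (fun j => if Nat.ltb j (S k') then Cmult (RtoC (Binomial.C (S k') (S j))) (f (S j)) else RtoC 0)
                 (fun j => Cmult (RtoC (Binomial.C (S k') (S j))) (f (S j)))).
      + ring.
      + intros j Hj. assert (E : Nat.ltb j (S k') = true) by (apply Nat.ltb_lt; lia). rewrite E. reflexivity. }
  rewrite Q. ring.
Qed.

Lemma Li_step z s j c : Cmod z < 1 -> 0 <= c ->
  CisS (fun m => Cmult (Cpow z m) (LiAux j z s (c + INR m))) (Cplus (LiAux j z s c) (LiAux (S j) z s c)).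
Proof.
  intros Hz Hc.
  apply (is_series_decr_1 (K := C_AbsRing) (V := C_NormedModule)).
  match goal with |- is_series _ ?v => replace v with (LiAux (S j) z s c) end.
  - exact (LiConv z s j s c (or_introl Hz) (Rle_refl _) Hc).
  - change (LiAux (S j) z s c = Cplus (Cplus (LiAux j z s c) (LiAux (S j) z s c))
                                     (Copp (Cmult (Cpow z 0) (LiAux j z s (c + INR 0))))).
    replace (c + INR 0) with c by (simpl; ring). simpl Cpow. ring.
Qed.

Lemma decomp z s k : Cmod z < 1 -> forall c, 0 < c ->
  PhiAux k z s c = csum (fun j => Cmult (RtoC (Binomial.C k j)) (LiAux j z s c)) k.
Proof.
  intros Hz. induction k as [|k IH]; intros c Hc.
  - simpl. rewrite Cbin_0. ring.
  - change (PhiAux (S k) z s c) with (CSeries (fun m => Cmult (Cpow z m) (PhiAux k z s (c + INR m)))).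
    rewrite <- pascal_csum. apply CSeries_CisS.
    pose proof (CisS_csum (fun j m => Cmult (RtoC (Binomial.C k j)) (Cmult (Cpow z m) (LiAux j z s (c + INR m))))
                  (fun j => Cmult (RtoC (Binomial.C k j)) (Cplus (LiAux j z s c) (LiAux (S j) z s c))) k
                  (fun j _ => CisS_scal _ _ _ (Li_step z s j c Hz ltac:(lra)))) as H.
    eapply CisS_ext; [|exact H]. intros m. simpl.
    rewrite (IH (c + INR m)) by (pose proof (pos_INR m); lra).
    rewrite csum_mult_l. apply csum_ext_loc. intros; ring.
Qed.

Lemma Cgeom_S rho : Cmod rho < 1 -> CisS (fun n => Cpow rho (S n)) (Cdiv rho (Cminus (RtoC 1) rho)).
Proof.
  intros Hr.
  assert (Hab : ex_series (fun n => Cmod (Cpow rho (S n)))).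
  { exists (Cmod rho / (1 - Cmod rho)). eapply is_series_ext; [|apply geom_S].
    intros n. rewrite Cmod_pow. reflexivity. split; auto. apply Cmod_ge_0. }
  pose proof (CisS_abs _ Hab) as H. set (G := CSeries (fun n => Cpow rho (S n))) in *.
  assert (H2 : CisS (fun n => Cpow rho (S n)) (Cplus (Cmult rho G) rho)).
  { apply (is_series_decr_1 (K := C_AbsRing) (V := C_NormedModule)).
    match goal with |- is_series _ ?v => replace v with (Cmult rho G) end.
    - eapply CisS_ext; [|exact (CisS_scal rho _ _ H)]. intros n. simpl. reflexivity.
    - change (Cmult rho G = Cplus (Cplus (Cmult rho G) rho) (Copp (Cpow rho 1))). simpl. ring. }
  pose proof (CisS_unique _ _ _ H H2) as E.
  assert (Hne : Cminus (RtoC 1) rho <> RtoC 0).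
  { intros E'. assert (rho = RtoC 1).
    { replace rho with (Cminus (RtoC 1) (Cminus (RtoC 1) rho)) by ring. rewrite E'. apply C_ext; simpl; ring. }
    subst. rewrite Cmod_1 in Hr. lra. }
  replace (Cdiv rho (Cminus (RtoC 1) rho)) with G. exact H.
  assert (E2 : Cmult G (Cminus (RtoC 1) rho) = rho).
  { transitivity (Cminus G (Cmult rho G)). ring. rewrite E at 1. ring. }
  unfold Cdiv. transitivity (Cmult (Cmult G (Cminus (RtoC 1) rho)) (Cinv (Cminus (RtoC 1) rho))).
  field. auto. rewrite E2. reflexivity.
Qed.

Lemma rpowC_1base w : rpowC 1 w = RtoC 1.
Proof. unfold rpowC. rewrite ln_1, !Rmult_0_r, exp_0, cos_0, sin_0. apply C_ext; simpl; ring. Qed.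

Lemma rpowC_pow x w n : 0 < x -> rpowC (x ^ n) w = Cpow (rpowC x w) n.
Proof.
  intros Hx. induction n. simpl. apply rpowC_1base.
  simpl pow. rewrite rpowC_mulbase by (auto; apply pow_lt; auto). rewrite IHn. simpl. reflexivity.
Qed.

Lemma jack_pow q s : 1 < q -> Re s < 1 ->
  CisS (fun n => Cmult (rpowC (aq q n) (Copp s)) (RtoC (aq q n)))
       (Cmult (RtoC (/ (q - 1))) (Cinv (qnum q (Cminus (RtoC 1) s)))).
Proof.
  intros Hq Hs.
  set (rho := rpowC (/ q) (Cminus (RtoC 1) s)).
  assert (Hlq : 0 < ln q) by (rewrite <- ln_1; apply ln_increasing; lra).
  assert (Hr : Cmod rho < 1).
  { unfold rho. rewrite Cmod_rpowC, ln_Rinv by lra. apply (Rlt_le_trans _ (exp 0)); [apply exp_increasing|rewrite exp_0; lra].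
    replace (Re (Cminus (RtoC 1) s)) with (1 - Re s) by (destruct s as [s1 s2]; simpl; ring).
    assert (0 < (1 - Re s) * ln q) by (apply Rmult_lt_0_compat; lra).
    replace ((1 - Re s) * - ln q) with (- ((1 - Re s) * ln q)) by ring. lra. }
  pose proof (Cgeom_S rho Hr) as H.
  set (Q := rpowC q (Cminus (RtoC 1) s)).
  assert (HQ : Cmult rho Q = RtoC 1).
  { unfold rho, Q. rewrite <- rpowC_mulbase by (try apply Rinv_0_lt_compat; lra).
    rewrite Rinv_l by lra. apply rpowC_1base. }
  assert (HQ0 : Q <> RtoC 0).
  { intros E. rewrite E, Cmult_0_r in HQ. apply (f_equal fst) in HQ. simpl in HQ. lra. }
  assert (Hrho : rho = Cinv Q).
  { transitivity (Cmult (Cmult rho Q) (Cinv Q)). field. auto. rewrite HQ. ring. }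
  assert (HQ1 : Cminus Q (RtoC 1) <> RtoC 0).
  { intros E. assert (Q = RtoC 1).
    { replace Q with (Cplus (Cminus Q (RtoC 1)) (RtoC 1)) by ring. rewrite E. apply C_ext; simpl; ring. }
    rewrite H0, Cmult_1_r in HQ. rewrite HQ, Cmod_1 in Hr. lra. }
  assert (Hq1 : RtoC (q - 1) <> RtoC 0) by (apply RtoC_neq0; lra).
  replace (Cmult (RtoC (/ (q - 1))) (Cinv (qnum q (Cminus (RtoC 1) s)))) with (Cdiv rho (Cminus (RtoC 1) rho)).
  - eapply CisS_ext; [|exact H]. intros n.
    unfold aq. rewrite <- (exp_ln (/ q ^ S n)) at 2 by (apply Rinv_0_lt_compat, pow_lt; lra).
    rewrite <- (Rmult_1_l (ln (/ q ^ S n))), <- rpowC_real, <- rpowC_plus.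
    replace (Cplus (Copp s) (RtoC 1)) with (Cminus (RtoC 1) s) by (apply C_ext; simpl; ring).
    rewrite <- pow_inv, rpowC_pow by (apply Rinv_0_lt_compat; lra). reflexivity.
  - unfold qnum. fold Q. rewrite Hrho. rewrite RtoC_inv by lra. field. repeat split; auto.
Qed.

Lemma sum_n_csum (f : nat -> C) n : @sum_n C_AbelianMonoid f n = csum f n.
Proof. induction n. rewrite sum_O. reflexivity. rewrite sum_Sn, IHn. reflexivity. Qed.

Definition jt (q : R) (f : R -> C) (n : nat) : C := Cmult (f (aq q n)) (RtoC (aq q n)).

Lemma jackson_def q f : jackson q f = Cmult (RtoC (q - 1)) (CSeries (jt q f)).
Proof. reflexivity. Qed.

Lemma csum_mult_r w f n : Cmult (csum f n) w = csum (fun j => Cmult (f j) w) n.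
Proof. induction n; simpl. reflexivity. rewrite <- IHn. ring. Qed.

Lemma jackson_csum q n (cf : nat -> C) (g : nat -> R -> C) :
  (forall j, (j <= n)%nat -> CisS (jt q (g j)) (CSeries (jt q (g j)))) ->
  jackson q (fun a => csum (fun j => Cmult (cf j) (g j a)) n) =
  csum (fun j => Cmult (cf j) (jackson q (g j))) n.
Proof.
  intros H.
  rewrite (jackson_jt q _ (csum (fun j => Cmult (cf j) (CSeries (jt q (g j)))) n)).
  - rewrite csum_mult_l. apply csum_ext_loc. intros j Hj. rewrite jackson_def. ring.
  - pose proof (CisS_csum (fun j m => Cmult (cf j) (jt q (g j) m)) (fun j => Cmult (cf j) (CSeries (jt q (g j)))) n
                  (fun j Hj => CisS_scal _ _ _ (H j Hj))) as H1.
    eapply CisS_ext; [|exact H1]. intros m. simpl. rewrite csum_mult_r. apply csum_ext_loc.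
    intros j Hj. unfold jt. ring.
Qed.

Lemma jack_Li q z s j : 1 < q -> Cmod z < 1 -> (0 < j)%nat ->
  CisS (jt q (fun a => LiAux j z s a)) (CSeries (jt q (fun a => LiAux j z s a))) /\
  jackson q (fun a => LiAux j z s a) =
  CSeries (fun l => Cdiv (Cmult (binomC (Copp s) l) (Li j z (Cplus s (RtoC (INR l))))) (qnum q (RtoC (INR (l + 1))))).
Proof.
  intros Hq Hz Hj.
  assert (HR : Reg z s j) by (left; auto).
  assert (Hc : 1 <= INR j) by (apply (le_INR 1); lia).
  destruct (jackson_Phi q z s j s (INR j) 1 Hq HR (Rle_refl _) Hc Rabs_R1) as [Sv [H1 H2]].
  assert (Hjt : CisS (jt q (fun a => LiAux j z s a)) (Cmult (Cpow z j) Sv)).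
  { eapply CisS_ext; [|exact (CisS_scal (Cpow z j) _ _ H1)]. intros n. unfold jt.
    destruct (aq_bounds q n Hq) as [Ha1 Ha2].
    rewrite (LiPhi z s j HR s (aq q n) (Rle_refl _)) by lra.
    replace (aq q n + INR j) with (INR j + 1 * aq q n) by ring. ring. }
  split. rewrite (CSeries_CisS _ _ Hjt). exact Hjt.
  rewrite (jackson_jt q _ _ Hjt).
  rewrite (CSeries_CisS _ (Cmult (Cpow z j) (Cmult (RtoC (q - 1)) Sv))).
  - ring.
  - eapply CisS_ext; [|exact (CisS_scal (Cpow z j) _ _ H2)]. intros l.
    rewrite (term_eq q j z s l (binomC (Copp s) l) Hq HR). rewrite pow1. ring.
Qed.

Lemma part1 q k z s : 1 < q -> (0 < k)%nat -> Cmod z < 1 -> Re s < 1 ->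
  jackson q (fun a => Phi k z s a) =
  Cplus (Cinv (qnum q (Cminus (RtoC 1) s)))
    (sum_n (fun r : nat =>
       Cmult (RtoC (Binomial.C k r))
         (CSeries (fun l : nat =>
            Cdiv (Cmult (binomC (Copp s) l) (Li (k - r) z (Cplus s (RtoC (INR l)))))
                 (qnum q (RtoC (INR (l + 1)))))))
       (k - 1)).
Proof.
  intros Hq Hk Hz Hs.
  rewrite (jackson_ext q _ (fun a => csum (fun j => Cmult (RtoC (Binomial.C k j)) (LiAux j z s a)) k)).
  2: { intros n. destruct (aq_bounds q n Hq). apply decomp; auto. }
  rewrite (jackson_csum q k (fun j => RtoC (Binomial.C k j)) (fun j a => LiAux j z s a)).
  2: { intros j Hj. destruct j as [|j].
       - pose proof (jack_pow q s Hq Hs) as H. change (CisS (jt q (fun a => LiAux 0 z s a)) (CSeries (jt q (fun a => LiAux 0 z s a)))).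
         assert (H' : CisS (jt q (fun a => LiAux 0 z s a)) (Cmult (RtoC (/ (q - 1))) (Cinv (qnum q (Cminus (RtoC 1) s))))) by exact H.
         rewrite (CSeries_CisS _ _ H'). exact H'.
       - apply jack_Li; auto; lia. }
  assert (J0 : jackson q (fun a => LiAux 0 z s a) = Cinv (qnum q (Cminus (RtoC 1) s))).
  { assert (H' : CisS (jt q (fun a => LiAux 0 z s a)) (Cmult (RtoC (/ (q - 1))) (Cinv (qnum q (Cminus (RtoC 1) s))))) by exact (jack_pow q s Hq Hs).
    rewrite (jackson_jt q _ _ H'). rewrite Cmult_assoc, <- RtoC_mult, Rinv_r by lra. apply Cmult_1_l. }
  destruct k as [|k']; [lia|].
  rewrite csum_shift, J0, Cbin_0, Cmult_1_l. f_equal.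
  rewrite sum_n_csum. replace (S k' - 1)%nat with k' by lia.
  rewrite csum_rev. apply csum_ext_loc. intros r Hr.
  replace (S (k' - r)) with (S k' - r)%nat by lia.
  rewrite Cbin_sym by lia. f_equal.
  apply jack_Li; auto; lia.
Qed.

Theorem theorem1p1 :
  (forall (q : R) (k : nat) (z s : C),
     1 < q -> (0 < k)%nat -> Cmod z < 1 -> Re s < 1 ->
     jackson q (fun a => Phi k z s a) =
     Cplus (Cinv (qnum q (Cminus (RtoC 1) s)))
       (sum_n (fun r : nat =>
          Cmult (RtoC (Binomial.C k r))
            (CSeries (fun l : nat =>
               Cdiv (Cmult (binomC (Copp s) l) (Li (k - r) z (Cplus s (RtoC (INR l)))))
                    (qnum q (RtoC (INR (l + 1)))))))
          (k - 1)))
  /\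
  (forall (q : R) (k : nat) (z s : C),
     1 < q -> (0 < k)%nat -> z <> RtoC 0 ->
     (Cmod z < 1 \/ (Cmod z = 1 /\ INR k < Re s)) ->
     jackson q (fun a => Phi k z s (INR k - a)) =
       Cmult (Cinv (Cpow z k))
         (CSeries (fun l : nat =>
            Cdiv (Cmult (Cmult (Cpow (RtoC (-1)) l) (binomC (Copp s) l))
                        (Li k z (Cplus s (RtoC (INR l)))))
                 (qnum q (RtoC (INR (l + 1))))))
     /\
     jackson q (fun a => Phi k z s (INR k + a)) =
       Cmult (Cinv (Cpow z k))
         (CSeries (fun l : nat =>
            Cdiv (Cmult (binomC (Copp s) l) (Li k z (Cplus s (RtoC (INR l)))))
                 (qnum q (RtoC (INR (l + 1))))))).
Proof.
  split.
  - intros q k z s Hq Hk Hz Hs. apply part1; auto.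
  - intros q k z s Hq Hk Hz HR. split.
    + rewrite (jackson_ext q _ (fun a => Phi k z s (INR k + (-1) * a))) by (intros n; f_equal; ring).
      rewrite (part23 q k z s (-1) Hq Hk Hz HR) by (unfold Rabs; destruct (Rcase_abs (-1)); lra).
      f_equal. apply CSeries_ext. intros l. f_equal. rewrite RtoC_pow. ring.
    + rewrite (jackson_ext q _ (fun a => Phi k z s (INR k + 1 * a))) by (intros n; f_equal; ring).
      rewrite (part23 q k z s 1 Hq Hk Hz HR Rabs_R1).
      f_equal. apply CSeries_ext. intros l. f_equal. rewrite pow1. ring.
Qed.
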